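(* Let $(X,d)$ be a compact pointed metric space such that $\mathrm{lip}_0(X)$ separates points uniformly, let $((x_n,y_n))_{n=1}^\infty$ be a sequence of distinct points in $\widetilde X$, let $T$ be its Lipschitz interpolating operator, and let $M\geq 1$. The following statements are equivalent: (i) $((x_n,y_n))_{n=1}^\infty$ is Lipschitz interpolating for $\mathrm{Lip}_0(X)$ and its Lipschitz interpolation constant is $M$. (ii) The operator $S:\ell_1\to\mathcal F(X)$ defined by $S(e_n)=m_{x_n,y_n}$ (i.e. $S(\lambda)=\sum_n\lambda_n m_{x_n,y_n}$) is an into isomorphism and $\frac1M=\max\{J>0: J\|\lambda\|_1\le\|S(\lambda)\|\ \forall\lambda\in\ell_1\}$. (iii) $((x_n,y_n))_{n=1}^\infty$ is Lipschitz $c_0$-interpolating for $\mathrm{lip}_0(X)$, i.e. for every $\alpha\in c_0$ there is $f\in\mathrm{lip}_0(X)$ with $T(f)=\alpha$, and $M=\inf\{K>0: \forall\alpha\in c_0,\ \|\alpha\|_\infty\le1,\ \exists f\in\mathrm{lip}_0(X),\ \|f\|\le K,\ T(f)=\alpha\}$. (iv) $M=\inf\{K>0: \forall \alpha\in c_0,\ \|\alpha\|_\infty\le 1,\ \exists f\in\mathrm{Lip}_0(X),\ \|f\|\le K,\ T(f)=\alpha\}$ (and in particular this set of constants is nonempty).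
   Context: All spaces are real. $(X,d)$ has a base point $0$, $\widetilde{X}=\{(x,y)\in X\times X: x\neq y\}$. $\mathrm{Lip}_0(X)$ is the Banach space of Lipschitz $f:X\to\mathbb{R}$ with $f(0)=0$, normed by $\|f\|=\sup_{(x,y)\in\widetilde X}|f(x)-f(y)|/d(x,y)$. $\mathrm{lip}_0(X)$ is the closed subspace of those $f$ such that for every $\varepsilon>0$ there is $\delta>0$ with $|f(x)-f(y)|/d(x,y)<\varepsilon$ whenever $0<d(x,y)<\delta$. $\mathrm{lip}_0(X)$ separates points uniformly if there is a constant $a>1$ such that for all $x,y\in X$ some $f\in\mathrm{lip}_0(X)$ has $\|f\|\le a$ and $|f(x)-f(y)|=d(x,y)$. For $x\in X$, $\delta_x\in\mathrm{Lip}_0(X)^*$ is $\delta_x(f)=f(x)$; $\mathcal F(X)$ is the closed linear span of $\{\delta_x\}$ in $\mathrm{Lip}_0(X)^*$; $m_{x,y}=(\delta_x-\delta_y)/d(x,y)$. $e_n$ are the unit vectors of $\ell_1$. The Lipschitz interpolating operator of the sequence is $T(f)=\big((f(x_n)-f(y_n))/d(x_n,y_n)\big)_{n}$ for $f\in\mathrm{Lip}_0(X)$. The sequence is Lipschitz interpolating for $\mathrm{Lip}_0(X)$ if $T:\mathrm{Lip}_0(X)\to\ell_\infty$ is surjective, and then its Lipschitz interpolation constant is $\inf\{K\geq1:\forall\alpha\in\ell_\infty,\|\alpha\|_\infty\le1,\ \exists f\in\mathrm{Lip}_0(X),\ \|f\|\le K,\ T(f)=\alpha\}$. *)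

(* Defs.v *)
From Stdlib Require Import Reals Lra.
From Coquelicot Require Import Coquelicot.
Open Scope R_scope.

Section Defs.
Context {X : Type} (d : X -> X -> R).

Definition is_metric : Prop :=
  (forall x y, 0 <= d x y) /\
  (forall x y, d x y = 0 <-> x = y) /\
  (forall x y, d x y = d y x) /\
  (forall x y z, d x z <= d x y + d y z).

Definition mopen (U : X -> Prop) : Prop :=
  forall x, U x -> exists r, 0 < r /\ forall y, d x y < r -> U y.

Definition mcompact : Prop :=
  forall (I : Type) (U : I -> X -> Prop),
    (forall i, mopen (U i)) -> (forall x, exists i, U i x) ->
    exists l : list I, forall x, exists i, List.In i l /\ U i x.

Definition lipnorm_le (f : X -> R) (K : R) : Prop :=
  forall x y, x <> y -> Rabs (f x - f y) / d x y <= K.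

Definition Lip0 (x0 : X) (f : X -> R) : Prop :=
  f x0 = 0 /\ exists L, lipnorm_le f L.

Definition lip0 (x0 : X) (f : X -> R) : Prop :=
  Lip0 x0 f /\
  forall eps, 0 < eps -> exists delta, 0 < delta /\
    forall x y, 0 < d x y < delta -> Rabs (f x - f y) / d x y < eps.

Definition separates_uniformly (x0 : X) : Prop :=
  exists a, 1 < a /\ forall x y, exists f, lip0 x0 f /\ lipnorm_le f a /\
    Rabs (f x - f y) = d x y.

Definition Tinterp (xs ys : nat -> X) (f : X -> R) : nat -> R :=
  fun n => (f (xs n) - f (ys n)) / d (xs n) (ys n).

Definition dual_norm (x0 : X) (phi : (X -> R) -> R) : Rbar :=
  Lub_Rbar (fun r => exists f, Lip0 x0 f /\ lipnorm_le f 1 /\ r = Rabs (phi f)).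

(** S(lambda) = sum_n lambda_n m_{x_n,y_n}, acting on f as sum_n lambda_n T(f)_n *)
Definition S_op (xs ys : nat -> X) (lam : nat -> R) : (X -> R) -> R :=
  fun f => Series (fun n => lam n * Tinterp xs ys f n).

End Defs.

Definition in_linf (a : nat -> R) : Prop := exists B, forall n, Rabs (a n) <= B.
Definition in_c0 (a : nat -> R) : Prop := is_lim_seq a 0.
Definition in_l1 (a : nat -> R) : Prop := ex_series (fun n => Rabs (a n)).
Definition l1norm (a : nat -> R) : R := Series (fun n => Rabs (a n)).
Definition sup_le1 (a : nat -> R) : Prop := forall n, Rabs (a n) <= 1.

Definition is_inf (E : R -> Prop) (m : R) : Prop :=
  (forall x, E x -> m <= x) /\ (forall b, (forall x, E x -> b <= x) -> b <= m).
Definition is_max (E : R -> Prop) (m : R) : Prop :=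
  E m /\ forall x, E x -> x <= m.

(* Main.v *)
Require Import Defs.
From Stdlib Require Import Reals Lra Lia List Classical ClassicalEpsilon FunctionalExtensionality.
From Coquelicot Require Import Coquelicot.
Open Scope R_scope.
Set Bullet Behavior "Strict Subproofs".
Ltac req := match goal with |- ?a = ?b => change (@eq R a b) end.

Lemma sum_n_stable (a : nat -> R) N :
  (forall m, (N < m)%nat -> a m = 0) -> forall k, sum_n a (N + k) = sum_n a N.
Proof.
  intros H k; induction k.
  - now rewrite Nat.add_0_r.
  - rewrite Nat.add_succ_r, sum_Sn, IHk, H by lia. unfold plus; simpl; ring.
Qed.

Lemma is_series_fin (a : nat -> R) N :
  (forall m, (N < m)%nat -> a m = 0) -> is_series a (sum_n a N).
Proof.
  intros H.
  assert (H' : is_lim_seq (sum_n a) (sum_n a N)); [|exact H'].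
  apply (is_lim_seq_ext_loc (fun _ => sum_n a N)).
  - exists N; intros n Hn. replace n with (N + (n - N))%nat by lia.
    now rewrite sum_n_stable.
  - apply is_lim_seq_const.
Qed.

Lemma Series_fin (a : nat -> R) N :
  (forall m, (N < m)%nat -> a m = 0) -> Series a = sum_n a N.
Proof. intros H; apply is_series_unique, is_series_fin, H. Qed.

Lemma ex_series_fin (a : nat -> R) N :
  (forall m, (N < m)%nat -> a m = 0) -> ex_series a.
Proof. intros H; eexists; apply is_series_fin, H. Qed.

Lemma sum_n_abs_le (u v : nat -> R) N :
  (forall m, Rabs (u m) <= v m) -> Rabs (sum_n u N) <= sum_n v N.
Proof.
  intros H; induction N.
  - rewrite !sum_O; apply H.
  - rewrite !sum_Sn; unfold plus; simpl.
    eapply Rle_trans; [apply Rabs_triang|]. specialize (H (S N)); lra.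
Qed.

Lemma sum_n_scal c (u : nat -> R) N : sum_n (fun m => c * u m) N = c * sum_n u N.
Proof.
  induction N.
  - now rewrite !sum_O.
  - rewrite !sum_Sn, IHN; unfold plus; simpl; ring.
Qed.

Lemma sum_n_le (u v : nat -> R) N :
  (forall m, u m <= v m) -> sum_n u N <= sum_n v N.
Proof.
  intros H; induction N.
  - rewrite !sum_O; apply H.
  - rewrite !sum_Sn; unfold plus; simpl. specialize (H (S N)); lra.
Qed.

Lemma sum_delta n c N :
  sum_n (fun m => if Nat.eq_dec m n then c else 0) N =
  if Compare_dec.le_dec n N then c else 0.
Proof.
  induction N.
  - rewrite sum_O. destruct (Nat.eq_dec 0 n), (Compare_dec.le_dec n 0); try lia; auto.
  - rewrite sum_Sn, IHN.
    destruct (Nat.eq_dec (S N) n), (Compare_dec.le_dec n N), (Compare_dec.le_dec n (S N)); try lia;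
    unfold plus; simpl; ring.
Qed.

Lemma glb_real (E : R -> Prop) (m : R) (e : R) :
  E e -> (forall x, E x -> m <= x) ->
  (forall x, E x -> real (Glb_Rbar E) <= x) /\
  (forall b, (forall x, E x -> b <= x) -> b <= real (Glb_Rbar E)).
Proof.
  intros He Hm.
  destruct (Glb_Rbar_correct E) as [H1 H2].
  assert (Hl : Rbar_le m (Glb_Rbar E)) by (apply H2; intros x Hx; apply Hm, Hx).
  assert (Hu : Rbar_le (Glb_Rbar E) e) by (apply H1, He).
  destruct (Glb_Rbar E) as [l| |]; simpl in *; try contradiction.
  split.
  - intros x Hx; apply (H1 x Hx).
  - intros b Hb. apply (H2 (Finite b)). intros x Hx; apply Hb, Hx.
Qed.

Lemma choice_fun {A B : Type} (P : A -> B -> Prop) :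
  (forall x, exists y, P x y) -> exists f : A -> B, forall x, P x (f x).
Proof.
  intros H. exists (fun x => proj1_sig (constructive_indefinite_description _ (H x))).
  intros x. apply (proj2_sig (constructive_indefinite_description _ (H x))).
Qed.

Section Main.
Variable X : Type.
Variable d : X -> X -> R.
Variable x0 : X.
Hypothesis Hd : is_metric d.

Lemma d_nn u v : 0 <= d u v. Proof. apply Hd. Qed.
Lemma d_uu u : d u u = 0. Proof. apply Hd; auto. Qed.
Lemma d_sym u v : d u v = d v u. Proof. apply Hd. Qed.
Lemma d_tri u v w : d u w <= d u v + d v w. Proof. apply Hd. Qed.
Lemma d_pos u v : u <> v -> 0 < d u v.
Proof.
  intros H. destruct (Rle_lt_or_eq_dec 0 (d u v) (d_nn u v)) as [h|h]; auto.
  exfalso; apply H; apply Hd; auto.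
Qed.
Lemma d_eq0 u v : d u v = 0 -> u = v. Proof. apply Hd. Qed.

Definition LipC (g : X -> R) (K : R) := forall u v, Rabs (g u - g v) <= K * d u v.

Lemma lipnorm_LipC g K : lipnorm_le d g K -> LipC g K.
Proof.
  intros H u v. destruct (classic (u = v)) as [->|n].
  - rewrite Rminus_eq_0, Rabs_R0, d_uu; lra.
  - specialize (H u v n). apply Rle_div_l in H; auto. apply d_pos, n.
Qed.

Lemma LipC_lipnorm g K : LipC g K -> lipnorm_le d g K.
Proof.
  intros H u v n. apply Rle_div_l; [apply d_pos, n|]. apply H.
Qed.

Definition littleL (g : X -> R) := forall eps, 0 < eps -> exists delta, 0 < delta /\
  forall u v, d u v < delta -> Rabs (g u - g v) <= eps * d u v.

Lemma lip0_iff g : lip0 d x0 g <-> (g x0 = 0 /\ (exists K, LipC g K) /\ littleL g).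
Proof.
  split.
  - intros [[H0 [K HK]] Hl]. split; [auto|split; [exists K; apply lipnorm_LipC, HK|]].
    intros eps Heps. destruct (Hl eps Heps) as [del [Hdel H]]. exists del; split; auto.
    intros u v Huv. destruct (classic (u = v)) as [->|n].
    + rewrite Rminus_eq_0, Rabs_R0, d_uu; lra.
    + assert (0 < d u v) by (apply d_pos, n).
      specialize (H u v (conj H1 Huv)). apply Rlt_le in H. apply Rle_div_l in H; auto.
  - intros [H0 [[K HK] Hl]]. split; [split; auto; exists K; apply LipC_lipnorm, HK|].
    intros eps Heps. destruct (Hl (eps/2)) as [del [Hdel H]]; [lra|].
    exists del; split; auto. intros u v [Hp Huv]. specialize (H u v Huv).
    apply Rle_lt_trans with (eps/2). apply Rle_div_l; auto. lra.
Qed.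


Section Chain.
Variables xs ys : nat -> X.
Hypothesis Hne : forall n, xs n <> ys n.
Variable L : R.
Variable a : nat -> R.

Inductive step := SM (v : X) | SF (n : nat) | SB (n : nat).

Definition s_target st := match st with SM v => v | SF n => ys n | SB n => xs n end.
Definition s_end st := match st with SM v => v | SF n => xs n | SB n => ys n end.
Definition dn n := d (xs n) (ys n).
Definition s_lam st (m : nat) : R := match st with
  | SM _ => 0
  | SF n => if Nat.eq_dec m n then dn n else 0
  | SB n => if Nat.eq_dec m n then - dn n else 0 end.
Definition s_p (t : nat -> R) st : R := match st with
  | SM _ => 0 | SF n => dn n * t n | SB n => - (dn n * t n) end.
Definition s_g (g : X -> R) st : R := match st with
  | SM _ => 0 | SF n => g (xs n) - g (ys n) | SB n => - (g (xs n) - g (ys n)) end.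

Fixpoint mlen u s := match s with nil => 0 | st :: s' => d u (s_target st) + mlen (s_end st) s' end.
Fixpoint mdiff (g : X -> R) u s := match s with nil => 0
  | st :: s' => (g (s_target st) - g u) + mdiff g (s_end st) s' end.
Fixpoint psum t s := match s with nil => 0 | st :: s' => s_p t st + psum t s' end.
Fixpoint gsum g s := match s with nil => 0 | st :: s' => s_g g st + gsum g s' end.
Fixpoint wend u s := match s with nil => u | st :: s' => wend (s_end st) s' end.
Fixpoint lam s (m : nat) : R := match s with nil => 0 | st :: s' => s_lam st m + lam s' m end.
Definition s_idx st := match st with SM _ => 0%nat | SF n => n | SB n => n end.
Fixpoint maxidx s := match s with nil => 0%nat | st :: s' => Nat.max (s_idx st) (maxidx s') end.
Definition cost u s := L * mlen u s + psum a s.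

Lemma dn_pos n : 0 < dn n. Proof. apply d_pos, Hne. Qed.

Lemma lam_zero s m : (maxidx s < m)%nat -> lam s m = 0.
Proof.
  induction s as [|st s IH]; simpl; intros H; auto.
  rewrite IH by lia. destruct st; simpl in *; try ring;
  destruct (Nat.eq_dec m n); try lia; ring.
Qed.

Lemma lam_sum s t N : (maxidx s <= N)%nat -> sum_n (fun m => lam s m * t m) N = psum t s.
Proof.
  induction s as [|st s IH]; simpl; intros H.
  - rewrite (sum_n_ext _ (fun _ => 0)).
    + rewrite sum_n_const; simpl; ring.
    + intros; simpl; ring.
  - rewrite (sum_n_ext _ (fun m => plus (s_lam st m * t m) (lam s m * t m))) by (intros; unfold plus; simpl; ring).
    rewrite sum_n_plus, IH by lia. unfold plus; simpl. f_equal.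
    destruct st; simpl in *.
    + rewrite (sum_n_ext _ (fun m => if Nat.eq_dec m 0 then 0 else 0)) by (intros m; destruct (Nat.eq_dec m 0); simpl; ring).
      rewrite sum_delta. destruct (Compare_dec.le_dec 0 N); auto.
    + rewrite (sum_n_ext _ (fun m => if Nat.eq_dec m n then dn n * t n else 0)).
      * rewrite sum_delta. destruct (Compare_dec.le_dec n N); auto; lia.
      * intros m; destruct (Nat.eq_dec m n); subst; [reflexivity|apply Rmult_0_l].
    + rewrite (sum_n_ext _ (fun m => if Nat.eq_dec m n then - (dn n * t n) else 0)).
      * rewrite sum_delta. destruct (Compare_dec.le_dec n N); auto; lia.
      * intros m; destruct (Nat.eq_dec m n); subst; [symmetry; apply Ropp_mult_distr_l|apply Rmult_0_l].
Qed.

Lemma psum_T g s : psum (Tinterp d xs ys g) s = gsum g s.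
Proof.
  induction s as [|st s IH]; simpl; auto. rewrite IH. f_equal.
  destruct st; simpl; auto; unfold Tinterp; fold (dn n); field; apply Rgt_not_eq, dn_pos.
Qed.

Lemma gsum_tele g u s : gsum g s + mdiff g u s = g (wend u s) - g u.
Proof.
  revert u; induction s as [|st s IH]; intros u; simpl; [ring|].
  specialize (IH (s_end st)). destruct st; simpl in *; lra.
Qed.

Lemma mdiff_le g u s : LipC g 1 -> Rabs (mdiff g u s) <= mlen u s.
Proof.
  intros Hg; revert u; induction s as [|st s IH]; intros u; simpl.
  - rewrite Rabs_R0; lra.
  - eapply Rle_trans; [apply Rabs_triang|]. specialize (IH (s_end st)).
    specialize (Hg (s_target st) u). rewrite d_sym in Hg. lra.
Qed.

Lemma mlen_nn u s : 0 <= mlen u s.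
Proof. revert u; induction s; intros u; simpl; [lra|]. specialize (IHs (s_end a0)); pose proof (d_nn u (s_target a0)); lra. Qed.

Lemma mlen_app u s st : mlen u (s ++ st :: nil) = mlen u s + d (wend u s) (s_target st).
Proof. revert u; induction s; intros u; simpl; [ring|]. rewrite IHs; ring. Qed.
Lemma psum_app t s st : psum t (s ++ st :: nil) = psum t s + s_p t st.
Proof. induction s; simpl; [ring|]. rewrite IHs; ring. Qed.
Lemma wend_app u s st : wend u (s ++ st :: nil) = s_end st.
Proof. revert u; induction s; intros u; simpl; auto. Qed.

Variable J : R.
Hypothesis HJ0 : 0 < J.
Hypothesis HL : L = / J.
Hypothesis HJ : forall lm, in_l1 lm -> Rbar_le (J * l1norm lm) (dual_norm d x0 (S_op d xs ys lm)).
Hypothesis Ha : sup_le1 a.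

Lemma cycle u s : 0 <= cost u s + L * d (wend u s) u.
Proof.
  set (N := maxidx s).
  assert (Hz : forall m, (N < m)%nat -> lam s m = 0) by (intros; apply lam_zero; auto).
  assert (Hl1 : in_l1 (lam s)).
  { apply (ex_series_fin _ N). intros m Hm; rewrite Hz; auto; apply Rabs_R0. }
  assert (Hnorm : l1norm (lam s) = sum_n (fun m => Rabs (lam s m)) N).
  { apply Series_fin. intros m Hm; rewrite Hz; auto; apply Rabs_R0. }
  set (B := mlen u s + d (wend u s) u).
  assert (HB : Rbar_le (dual_norm d x0 (S_op d xs ys (lam s))) B).
  { unfold dual_norm. destruct (Lub_Rbar_correct (fun r => exists f, Lip0 d x0 f /\ lipnorm_le d f 1 /\
         r = Rabs (S_op d xs ys (lam s) f))) as [_ H2].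
    apply H2. intros r [g [_ [Hg ->]]]. simpl.
    unfold S_op. rewrite (Series_fin _ N).
    2: { intros m Hm; rewrite Hz; auto; ring. }
    rewrite lam_sum by (unfold N; lia). rewrite psum_T.
    pose proof (gsum_tele g u s) as Ht. apply lipnorm_LipC in Hg.
    pose proof (mdiff_le g u s Hg). pose proof (Hg (wend u s) u).
    replace (gsum g s) with (g (wend u s) - g u - mdiff g u s) by lra.
    unfold B. eapply Rle_trans; [apply Rabs_triang|]. rewrite Rabs_Ropp.
    lra. }
  pose proof (Rbar_le_trans _ _ _ (HJ _ Hl1) HB) as H. simpl in H.
  assert (Hp : Rabs (psum a s) <= l1norm (lam s)).
  { rewrite <- (lam_sum s a N) by (unfold N; lia). rewrite Hnorm.
    apply sum_n_abs_le. intros m. rewrite Rabs_mult. specialize (Ha m).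
    pose proof (Rabs_pos (lam s m)). pose proof (Rabs_pos (a m)). nra. }
  unfold cost. unfold B in H.
  assert (L * (J * l1norm (lam s)) <= L * (mlen u s + d (wend u s) u)).
  { apply Rmult_le_compat_l; auto. rewrite HL; left; apply Rinv_0_lt_compat; auto. }
  replace (L * (J * l1norm (lam s))) with (l1norm (lam s)) in H0 by (rewrite HL; field; lra).
  pose proof (Rle_abs (- psum a s)) as Hq; rewrite Rabs_Ropp in Hq; lra.
Qed.

Definition Phi s v := cost x0 s + L * d (wend x0 s) v.
Definition fpot v := real (Glb_Rbar (fun r => exists s, r = Phi s v)).

Lemma L_nn : 0 <= L. Proof. rewrite HL; left; apply Rinv_0_lt_compat; auto. Qed.

Lemma Phi_lb s v : - L * d v x0 <= Phi s v.
Proof.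
  unfold Phi. pose proof (cycle x0 s). pose proof (d_tri (wend x0 s) v x0).
  pose proof L_nn. nra.
Qed.

Lemma fpot_spec v :
  (forall s, fpot v <= Phi s v) /\ (forall b, (forall s, b <= Phi s v) -> b <= fpot v).
Proof.
  destruct (glb_real (fun r => exists s, r = Phi s v) (- L * d v x0) (Phi nil v)) as [H1 H2].
  - exists nil; auto.
  - intros x [s ->]; apply Phi_lb.
  - split.
    + intros s; apply H1; exists s; auto.
    + intros b Hb; apply H2; intros x [s ->]; auto.
Qed.

Lemma chain_exists : exists f, Lip0 d x0 f /\ lipnorm_le d f L /\ Tinterp d xs ys f = a.
Proof.
  exists fpot.
  assert (Hlip : LipC fpot L).
  { assert (H : forall u v, fpot v <= fpot u + L * d u v).
    { intros u v. assert (fpot v - L * d u v <= fpot u); [|lra].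
      apply (proj2 (fpot_spec u)). intros s.
      pose proof (proj1 (fpot_spec v) s). unfold Phi in *.
      pose proof (d_tri (wend x0 s) u v). pose proof L_nn. nra. }
    intros u v. apply Rabs_le. pose proof (H u v). pose proof (H v u).
    rewrite d_sym in H1. lra. }
  assert (H0 : fpot x0 = 0).
  { apply Rle_antisym.
    - pose proof (proj1 (fpot_spec x0) nil). unfold Phi, cost in H; simpl in H.
      rewrite d_uu in H. lra.
    - apply (proj2 (fpot_spec x0)). intros s. pose proof (Phi_lb s x0). rewrite d_uu in H. lra. }
  split; [split; auto; exists L; apply LipC_lipnorm; auto|].
  split; [apply LipC_lipnorm; auto|].
  apply functional_extensionality; intros n.
  assert (H1 : fpot (xs n) - a n * dn n <= fpot (ys n)).
  { apply (proj2 (fpot_spec (ys n))). intros s.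
    pose proof (proj1 (fpot_spec (xs n)) (s ++ SF n :: nil)).
    unfold Phi, cost in *. rewrite mlen_app, psum_app, wend_app in H. simpl in H.
    rewrite d_uu in H. nra. }
  assert (H2 : fpot (ys n) + a n * dn n <= fpot (xs n)).
  { apply (proj2 (fpot_spec (xs n))). intros s.
    pose proof (proj1 (fpot_spec (ys n)) (s ++ SB n :: nil)).
    unfold Phi, cost in *. rewrite mlen_app, psum_app, wend_app in H. simpl in H.
    rewrite d_uu in H. nra. }
  unfold Tinterp. fold (dn n). pose proof (dn_pos n).
  replace (fpot (xs n) - fpot (ys n)) with (a n * dn n) by lra. field; lra.
Qed.

End Chain.


Lemma abs_le_iff x e : Rabs x <= e <-> - e <= x <= e.
Proof.
  split.
  - intros H. pose proof (Rle_abs x). pose proof (Rle_abs (- x)). rewrite Rabs_Ropp in H1. lra.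
  - intros H. apply Rabs_le. lra.
Qed.

Lemma Rmin_lip a b a' b' e : Rabs (a - a') <= e -> Rabs (b - b') <= e -> Rabs (Rmin a b - Rmin a' b') <= e.
Proof.
  rewrite !abs_le_iff. intros H1 H2. unfold Rmin.
  destruct (Rle_dec a b), (Rle_dec a' b'); lra.
Qed.

Lemma Rmax_lip a b a' b' e : Rabs (a - a') <= e -> Rabs (b - b') <= e -> Rabs (Rmax a b - Rmax a' b') <= e.
Proof.
  rewrite !abs_le_iff. intros H1 H2. unfold Rmax.
  destruct (Rle_dec a b), (Rle_dec a' b'); lra.
Qed.

Lemma op_good (op : R -> R -> R)
  (Hop : forall a b a' b' e, Rabs (a - a') <= e -> Rabs (b - b') <= e -> Rabs (op a b - op a' b') <= e)
  g h K : LipC g K -> littleL g -> LipC h K -> littleL h ->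
  LipC (fun u => op (g u) (h u)) K /\ littleL (fun u => op (g u) (h u)).
Proof.
  intros Hg hg Hh hh. split.
  - intros u v. apply Hop; auto.
  - intros eps Heps. destruct (hg eps Heps) as [d1 [Hd1 H1]]. destruct (hh eps Heps) as [d2 [Hd2 H2]].
    exists (Rmin d1 d2). split; [apply Rmin_pos; auto|].
    intros u v Huv. apply Hop; [apply H1|apply H2].
    + apply Rlt_le_trans with (Rmin d1 d2); [exact Huv|apply Rmin_l].
    + apply Rlt_le_trans with (Rmin d1 d2); [exact Huv|apply Rmin_r].
Qed.

Lemma fold_good (op : R -> R -> R)
  (Hop : forall a b a' b' e, Rabs (a - a') <= e -> Rabs (b - b') <= e -> Rabs (op a b - op a' b') <= e)
  {I : Type} (F : I -> X -> R) (base : X -> R) K (l : list I) :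
  (forall i, LipC (F i) K /\ littleL (F i)) -> LipC base K -> littleL base ->
  LipC (fun u => fold_right (fun i acc => op (F i u) acc) (base u) l) K /\
  littleL (fun u => fold_right (fun i acc => op (F i u) acc) (base u) l).
Proof.
  intros HF Hb hb. induction l as [|i l IH]; simpl; auto.
  destruct IH as [IH1 IH2]. destruct (HF i).
  apply (op_good op Hop (F i) (fun u => fold_right (fun i acc => op (F i u) acc) (base u) l)); auto.
Qed.

Lemma const_good c K : 0 <= K -> LipC (fun _ => c) K /\ littleL (fun _ => c).
Proof.
  intros HK. split.
  - intros u v. rewrite Rminus_eq_0, Rabs_R0. pose proof (d_nn u v). nra.
  - intros eps Heps. exists 1. split; [lra|]. intros u v _. rewrite Rminus_eq_0, Rabs_R0.
    pose proof (d_nn u v). nra.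
Qed.

Lemma LipC_mono g K K' : K <= K' -> LipC g K -> LipC g K'.
Proof. intros HK H u v. specialize (H u v). pose proof (d_nn u v). nra. Qed.

Lemma littleL_plus g h : littleL g -> littleL h -> littleL (fun u => g u + h u).
Proof.
  intros hg hh eps Heps. destruct (hg (eps/2)) as [d1 [Hd1 H1]]; [lra|].
  destruct (hh (eps/2)) as [d2 [Hd2 H2]]; [lra|].
  exists (Rmin d1 d2). split; [apply Rmin_pos; auto|].
  intros u v Huv.
  assert (d u v < d1) by (apply Rlt_le_trans with (Rmin d1 d2); [exact Huv|apply Rmin_l]).
  assert (d u v < d2) by (apply Rlt_le_trans with (Rmin d1 d2); [exact Huv|apply Rmin_r]).
  specialize (H1 u v H). specialize (H2 u v H0).
  replace (g u + h u - (g v + h v)) with ((g u - g v) + (h u - h v)) by ring.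
  eapply Rle_trans; [apply Rabs_triang|]. lra.
Qed.

Lemma littleL_scale g c : littleL g -> littleL (fun u => c * g u).
Proof.
  intros hg eps Heps. destruct (hg (eps / (Rabs c + 1))) as [d1 [Hd1 H1]].
  { apply Rdiv_lt_0_compat; auto. pose proof (Rabs_pos c); lra. }
  exists d1; split; auto. intros u v Huv. specialize (H1 u v Huv).
  replace (c * g u - c * g v) with (c * (g u - g v)) by ring. rewrite Rabs_mult.
  pose proof (Rabs_pos c). pose proof (Rabs_pos (g u - g v)). pose proof (d_nn u v).
  assert (Rabs c * Rabs (g u - g v) <= Rabs c * (eps / (Rabs c + 1) * d u v)) by (apply Rmult_le_compat_l; auto).
  assert (Rabs c * (eps / (Rabs c + 1) * d u v) <= eps * d u v).
  { replace (Rabs c * (eps / (Rabs c + 1) * d u v)) with ((Rabs c / (Rabs c + 1)) * (eps * d u v)) by (field; lra).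
    assert (Rabs c / (Rabs c + 1) <= 1) by (apply (proj1 (Rdiv_le_1 (Rabs c) (Rabs c + 1) ltac:(lra))); lra).
    assert (0 <= eps * d u v) by nra. nra. }
  lra.
Qed.

Lemma LipC_plus g h K1 K2 : LipC g K1 -> LipC h K2 -> LipC (fun u => g u + h u) (K1 + K2).
Proof.
  intros H1 H2 u v. specialize (H1 u v). specialize (H2 u v).
  replace (g u + h u - (g v + h v)) with ((g u - g v) + (h u - h v)) by ring.
  eapply Rle_trans; [apply Rabs_triang|]. lra.
Qed.

Lemma open_lt (h k : X -> R) Kh Kk : 0 <= Kh -> 0 <= Kk -> LipC h Kh -> LipC k Kk ->
  mopen d (fun u => h u < k u).
Proof.
  intros H1 H2 Hh Hk u Hu. set (g := k u - h u).
  exists (g / (Kh + Kk + 1)). split; [apply Rdiv_lt_0_compat; unfold g; lra|].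
  intros w Hw. specialize (Hh u w). specialize (Hk u w).
  rewrite abs_le_iff in Hh, Hk. pose proof (d_nn u w).
  assert ((Kh + Kk + 1) * d u w < g).
  { apply Rlt_le_trans with ((Kh + Kk + 1) * (g / (Kh + Kk + 1))).
    - apply Rmult_lt_compat_l; lra.
    - right; field; lra. }
  unfold g in H0. nra.
Qed.

Section Lattice.
Variable aa : R.
Hypothesis Haa : 1 < aa.
Hypothesis Hsepa : forall x y, exists f, lip0 d x0 f /\ lipnorm_le d f aa /\ Rabs (f x - f y) = d x y.
Hypothesis Hcpt : mcompact d.

Lemma two_point f L : 0 <= L -> LipC f L -> forall x y, exists h,
  (LipC h (aa * L) /\ littleL h) /\ h x = f x /\ h y = f y.
Proof.
  intros HL Hf x y. destruct (classic (x = y)) as [<-|Hxy].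
  - exists (fun _ => f x). split; [apply const_good; nra|]. auto.
  - destruct (Hsepa x y) as [g [Hg [Hga Hgd]]].
    apply lip0_iff in Hg. destruct Hg as [_ [_ hg]]. apply lipnorm_LipC in Hga.
    assert (Hd0 : 0 < d x y) by (apply d_pos; auto).
    assert (Hgn : g y - g x <> 0).
    { intros E. rewrite <- Rabs_Ropp in Hgd. replace (- (g x - g y)) with (g y - g x) in Hgd by ring.
      rewrite E, Rabs_R0 in Hgd. lra. }
    set (c := (f y - f x) / (g y - g x)).
    assert (Hc : Rabs c <= L).
    { unfold c. rewrite Rabs_div by auto. apply Rle_div_l.
      - apply Rabs_pos_lt; auto.
      - rewrite (Rabs_minus_sym (g y) (g x)), Hgd.
        specialize (Hf y x). rewrite d_sym in Hf. lra. }
    exists (fun u => f x + c * (g u - g x)). split; [split|split].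
    + intros u v. replace (f x + c * (g u - g x) - (f x + c * (g v - g x))) with (c * (g u - g v)) by ring.
      rewrite Rabs_mult. specialize (Hga u v). pose proof (Rabs_pos c). pose proof (Rabs_pos (g u - g v)).
      pose proof (d_nn u v).
      apply Rle_trans with (Rabs c * (aa * d u v)); [apply Rmult_le_compat_l; auto|]. nra.
    + apply (littleL_plus (fun _ => f x) (fun u => c * (g u - g x))).
      * apply const_good with (K := 0); lra.
      * apply littleL_scale. intros eps Heps. destruct (hg eps Heps) as [del [Hdel H]].
        exists del; split; auto. intros u v Huv. replace (g u - g x - (g v - g x)) with (g u - g v) by ring. auto.
    + ring.
    + unfold c. field. auto.
Qed.

Lemma fold_min_le {I : Type} (F : I -> X -> R) base l u i :
  In i l -> fold_right (fun i acc => Rmin (F i u) acc) (base u) l <= F i u.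
Proof.
  induction l as [|j l IH]; simpl; [tauto|]. intros [->|Hi].
  - apply Rmin_l.
  - eapply Rle_trans; [apply Rmin_r|]. auto.
Qed.
Lemma fold_min_base {I : Type} (F : I -> X -> R) base l u :
  fold_right (fun i acc => Rmin (F i u) acc) (base u) l <= base u.
Proof. induction l as [|j l IH]; simpl; [lra|]. eapply Rle_trans; [apply Rmin_r|]. auto. Qed.
Lemma fold_min_eq {I : Type} (F : I -> X -> R) base l u :
  (forall i, F i u = base u) -> fold_right (fun i acc => Rmin (F i u) acc) (base u) l = base u.
Proof. intros H. induction l as [|j l IH]; simpl; auto. rewrite IH, H. unfold Rmin; destruct (Rle_dec _ _); auto. Qed.
Lemma fold_max_ge {I : Type} (F : I -> X -> R) base l u i :
  In i l -> F i u <= fold_right (fun i acc => Rmax (F i u) acc) (base u) l.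
Proof.
  induction l as [|j l IH]; simpl; [tauto|]. intros [->|Hi].
  - apply Rmax_l.
  - eapply Rle_trans; [|apply Rmax_r]. auto.
Qed.
Lemma fold_max_le {I : Type} (F : I -> X -> R) base l u b :
  (forall i, F i u <= b) -> base u <= b -> fold_right (fun i acc => Rmax (F i u) acc) (base u) l <= b.
Proof. intros H Hb. induction l as [|j l IH]; simpl; auto. apply Rmax_lub; auto. Qed.

Lemma lattice_approx f L : 0 <= L -> LipC f L -> f x0 = 0 -> forall eta, 0 < eta ->
  exists g, g x0 = 0 /\ LipC g (aa * L) /\ littleL g /\ forall u, Rabs (g u - f u) <= eta.
Proof.
  intros HL Hf Hf0 eta Heta.
  assert (HaL : 0 <= aa * L) by nra.
  destruct (choice_fun (fun (p : X * X) h => (LipC h (aa * L) /\ littleL h) /\ h (fst p) = f (fst p) /\ h (snd p) = f (snd p)))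
    as [hf Hhf].
  { intros [x y]. apply two_point; auto. }
  assert (Hk : forall x, exists k, (LipC k (aa * L) /\ littleL k) /\ k x = f x /\ forall u, k u < f u + eta / 2).
  { intros x.
    destruct (Hcpt X (fun y u => hf (x, y) u < f u + eta / 2)) as [l Hl].
    - intros y. apply (open_lt _ _ (aa * L) L); auto.
      + apply Hhf.
      + intros u v. replace (f u + eta / 2 - (f v + eta / 2)) with (f u - f v) by ring. apply Hf.
    - intros u. exists u. destruct (Hhf (x, u)) as [_ [_ H]]. simpl in H. rewrite H. lra.
    - exists (fun u => fold_right (fun y acc => Rmin (hf (x, y) u) acc) ((fun _ => f x) u) l).
      split; [|split].
      + apply (fold_good Rmin Rmin_lip (fun y => hf (x, y)) (fun _ => f x)).
        * intros y; apply Hhf.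
        * apply (proj1 (const_good (f x) (aa * L) HaL)).
        * apply (proj2 (const_good (f x) (aa * L) HaL)).
      + apply (fold_min_eq (fun y => hf (x, y)) (fun _ => f x)). intros y. apply (Hhf (x, y)).
      + intros u. destruct (Hl u) as [y [Hy Hu]].
        eapply Rle_lt_trans; [apply (fold_min_le (fun y => hf (x, y)) (fun _ => f x) l u y Hy)|]. auto. }
  destruct (choice_fun _ Hk) as [kf Hkf].
  destruct (Hcpt X (fun x u => f u - eta / 2 < kf x u)) as [l Hl].
  - intros x. apply (open_lt _ _ L (aa * L)); auto.
    + intros u v. replace (f u - eta / 2 - (f v - eta / 2)) with (f u - f v) by ring. apply Hf.
    + apply Hkf.
  - intros u. exists u. destruct (Hkf u) as [_ [H _]]. rewrite H. lra.
  - set (k := fun u => fold_right (fun x acc => Rmax (kf x u) acc) (kf x0 u) l).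
    assert (Hkg : LipC k (aa * L) /\ littleL k).
    { apply (fold_good Rmax Rmax_lip kf (kf x0)); try apply Hkf. }
    assert (Hup : forall u, k u <= f u + eta / 2).
    { intros u. apply fold_max_le; intros; left; apply Hkf. }
    assert (Hlo : forall u, f u - eta / 2 < k u).
    { intros u. destruct (Hl u) as [x [Hx Hu]]. eapply Rlt_le_trans; [apply Hu|].
      apply (fold_max_ge kf (kf x0) l u x Hx). }
    exists (fun u => k u - k x0). split; [ring|split; [|split]].
    + intros u v. replace (k u - k x0 - (k v - k x0)) with (k u - k v) by ring. apply Hkg.
    + apply (littleL_plus k (fun _ => - k x0)); [apply Hkg|apply const_good with (K := 0); lra].
    + intros u. pose proof (Hup u). pose proof (Hlo u). pose proof (Hup x0). pose proof (Hlo x0).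
      rewrite Hf0 in *. apply Rabs_le. lra.
Qed.

End Lattice.


Lemma geom_bound (a : nat -> R) q B : 0 <= q < 1 -> (forall k, Rabs (a k) <= q ^ k * B) ->
  ex_series a /\ ex_series (fun k => Rabs (a k)) /\ Rabs (Series a) <= B / (1 - q).
Proof.
  intros Hq H.
  assert (Hg : ex_series (fun k => q ^ k * B)).
  { apply ex_series_scal_r, ex_series_geom. rewrite Rabs_right; lra. }
  assert (Ha : ex_series (fun k => Rabs (a k))).
  { apply (ex_series_le (fun k => Rabs (a k)) (fun k => q ^ k * B)); auto.
    intros k. change (Rabs (Rabs (a k)) <= q ^ k * B). rewrite Rabs_Rabsolu; auto. }
  split; [apply ex_series_Rabs; auto|split; auto].
  eapply Rle_trans; [apply Series_Rabs; auto|].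
  eapply Rle_trans; [apply Series_le; [|exact Hg]|].
  - intros k; split; [apply Rabs_pos|apply H].
  - rewrite Series_scal_r, Series_geom by (rewrite Rabs_right; lra). right; field. lra.
Qed.

Lemma sum_f_minus (a b : nat -> R) K : sum_f_R0 (fun k => a k - b k) K = sum_f_R0 a K - sum_f_R0 b K.
Proof. induction K; simpl; [ring|]. rewrite IHK; ring. Qed.

Lemma series_fun (fk : nat -> X -> R) q C : 0 <= q < 1 -> 0 <= C ->
  (forall k, fk k x0 = 0) -> (forall k, LipC (fk k) (q ^ k * C)) -> (forall k, littleL (fk k)) ->
  let F := fun u => Series (fun k => fk k u) in
  F x0 = 0 /\ LipC F (C / (1 - q)) /\ littleL F /\
  (forall u, ex_series (fun k => fk k u)).
Proof.
  intros Hq HC H0 HL hl F.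
  assert (Hb : forall u v k, Rabs (fk k u - fk k v) <= q ^ k * (C * d u v)).
  { intros u v k. rewrite <- Rmult_assoc. apply HL. }
  assert (Hex : forall u, ex_series (fun k => fk k u)).
  { intros u. apply (geom_bound _ q (C * d u x0)); auto. intros k.
    pose proof (Hb u x0 k) as Hk. rewrite H0, Rminus_0_r in Hk. exact Hk. }
  assert (Hdiff : forall u v, F u - F v = Series (fun k => fk k u - fk k v)).
  { intros u v. unfold F. rewrite Series_minus; auto. }
  split; [|split; [|split; auto]].
  - unfold F. rewrite (Series_ext _ (fun _ => 0)) by auto.
    rewrite (Series_fin _ 0) by auto. rewrite sum_O. reflexivity.
  - intros u v. rewrite Hdiff. destruct (geom_bound (fun k => fk k u - fk k v) q (C * d u v) Hq (Hb u v)) as [_ [_ H]].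
    eapply Rle_trans; [apply H|]. right; field; lra.
  - intros eps Heps.
    assert (Hqk : exists K, q ^ (S K) * C / (1 - q) <= eps / 2).
    { destruct (proj2 (is_lim_seq_spec _ _) (is_lim_seq_geom q ltac:(rewrite Rabs_right; lra))
          (mkposreal (eps / 2 * (1 - q) / (C + 1)) ltac:(apply Rdiv_lt_0_compat; [apply Rmult_lt_0_compat|]; lra))) as [N HN].
      exists N. specialize (HN (S N) ltac:(lia)).
      change (Rabs (q ^ S N - 0) < eps / 2 * (1 - q) / (C + 1)) in HN.
      assert (0 <= q ^ S N) by (apply pow_le; lra).
      rewrite Rminus_0_r, Rabs_right in HN by lra.
      apply Rle_div_l; [lra|].
      apply Rlt_le in HN. apply Rle_div_r in HN; [|lra]. nra. }
    destruct Hqk as [K HK].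
    set (P := fun u => sum_f_R0 (fun k => fk k u) K).
    assert (hP : littleL P).
    { assert (Hall : forall K, littleL (fun u => sum_f_R0 (fun k => fk k u) K)).
      { intros K'. induction K' as [|K' IH]; simpl; [apply hl|].
        apply (littleL_plus (fun u => sum_f_R0 (fun k => fk k u) K') (fk (S K'))); auto. }
      apply Hall. }
    destruct (hP (eps / 2)) as [del [Hdel HP]]; [lra|].
    exists del; split; auto. intros u v Huv.
    rewrite Hdiff.
    rewrite (Series_incr_n _ (S K)) by (lia || apply (geom_bound _ q (C * d u v) Hq (Hb u v))).
    simpl pred. rewrite sum_f_minus.
    eapply Rle_trans; [apply Rabs_triang|].
    assert (Ht : Rabs (Series (fun k => fk (S K + k)%nat u - fk (S K + k)%nat v)) <= q ^ S K * (C * d u v) / (1 - q)).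
    { apply geom_bound; auto. intros k. eapply Rle_trans; [apply Hb|]. rewrite pow_add. right; ring. }
    specialize (HP u v Huv). unfold P in HP.
    assert (q ^ S K * (C * d u v) / (1 - q) <= eps / 2 * d u v).
    { replace (q ^ S K * (C * d u v) / (1 - q)) with (q ^ S K * C / (1 - q) * d u v) by (field; lra).
      apply Rmult_le_compat_r; [apply d_nn|auto]. }
    lra.
Qed.

Section Seq.
Variables xs ys : nat -> X.
Hypothesis Hne : forall n, xs n <> ys n.

Definition E2 J := 0 < J /\ forall lm, in_l1 lm ->
   Rbar_le (J * l1norm lm) (dual_norm d x0 (S_op d xs ys lm)).

Lemma dn_pos' n : 0 < d (xs n) (ys n). Proof. apply d_pos, Hne. Qed.

Lemma T_eq f n : f (xs n) - f (ys n) = Tinterp d xs ys f n * d (xs n) (ys n).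
Proof. unfold Tinterp. field. apply Rgt_not_eq, dn_pos'. Qed.

Lemma E2_sol J : E2 J -> forall a, sup_le1 a ->
  exists f, Lip0 d x0 f /\ lipnorm_le d f (/ J) /\ Tinterp d xs ys f = a.
Proof. intros [HJ0 HJ] a Ha. eapply chain_exists; eauto. Qed.

Lemma E2_le1 J : E2 J -> 1 <= / J.
Proof.
  intros HE. destruct (E2_sol J HE (fun _ => 1)) as [f [_ [Hf HT]]].
  - intros n; rewrite Rabs_R1; lra.
  - apply lipnorm_LipC in Hf. specialize (Hf (xs 0%nat) (ys 0%nat)).
    rewrite T_eq, HT in Hf. pose proof (dn_pos' 0).
    rewrite Rmult_1_l, Rabs_right in Hf by lra.
    apply Rmult_le_reg_r with (d (xs 0%nat) (ys 0%nat)); lra.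
Qed.

Definition sgn x := if Rle_dec 0 x then 1 else -1.
Lemma sgn_mul x : x * sgn x = Rabs x.
Proof. unfold sgn; destruct (Rle_dec 0 x). rewrite Rabs_right; lra. rewrite Rabs_left; lra. Qed.
Lemma sgn_abs x : Rabs (sgn x) <= 1.
Proof. unfold sgn; destruct (Rle_dec 0 x); apply Rabs_le; lra. Qed.

Lemma is_lim_seq_Series (a : nat -> R) : ex_series a -> is_lim_seq (sum_n a) (Series a).
Proof. intros H. apply Series_correct in H. exact H. Qed.

Lemma scale_LipC f K c : LipC f K -> LipC (fun x => c * f x) (Rabs c * K).
Proof.
  intros H u v. replace (c * f u - c * f v) with (c * (f u - f v)) by ring.
  rewrite Rabs_mult. pose proof (Rabs_pos c). specialize (H u v). nra.
Qed.

Lemma T_scale f c : Tinterp d xs ys (fun x => c * f x) = fun n => c * Tinterp d xs ys f n.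
Proof.
  apply functional_extensionality; intros n. unfold Tinterp. field. apply Rgt_not_eq, dn_pos'.
Qed.

Lemma E4_E2 K : 0 < K ->
  (forall a, in_c0 a -> sup_le1 a -> exists f, Lip0 d x0 f /\ lipnorm_le d f K /\ Tinterp d xs ys f = a) ->
  E2 (/ K).
Proof.
  intros HK H. split; [apply Rinv_0_lt_compat; auto|]. intros lm Hlm.
  set (D := dual_norm d x0 (S_op d xs ys lm)).
  assert (HN : forall N, Rbar_le (/ K * sum_n (fun m => Rabs (lm m)) N) D).
  { intros N. set (al := fun m => if Compare_dec.le_dec m N then sgn (lm m) else 0).
    destruct (H al) as [f [[Hf0 _] [Hf HT]]].
    - unfold in_c0. apply (is_lim_seq_ext_loc (fun _ => 0)).
      + exists (S N); intros m Hm; unfold al; destruct (Compare_dec.le_dec m N); auto; lia.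
      + apply is_lim_seq_const.
    - intros m; unfold al; destruct (Compare_dec.le_dec m N). apply sgn_abs. rewrite Rabs_R0; lra.
    - set (g := fun x => / K * f x).
      assert (Hg : Lip0 d x0 g /\ lipnorm_le d g 1).
      { split; [split|].
        - unfold g; rewrite Hf0; ring.
        - exists 1. apply LipC_lipnorm. intros u v.
          pose proof (scale_LipC f K (/ K) (lipnorm_LipC f K Hf) u v).
          cbv beta in H0. rewrite (Rabs_right (/ K)) in H0 by (left; apply Rinv_0_lt_compat; auto).
          replace (/ K * K) with 1 in H0 by (req; field; lra). exact H0.
        - apply LipC_lipnorm. intros u v.
          pose proof (scale_LipC f K (/ K) (lipnorm_LipC f K Hf) u v).
          cbv beta in H0. rewrite (Rabs_right (/ K)) in H0 by (left; apply Rinv_0_lt_compat; auto).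
          replace (/ K * K) with 1 in H0 by (req; field; lra). exact H0. }
      destruct (Lub_Rbar_correct (fun r => exists f, Lip0 d x0 f /\ lipnorm_le d f 1 /\
         r = Rabs (S_op d xs ys lm f))) as [H1 _].
      assert (HS : S_op d xs ys lm g = / K * sum_n (fun m => Rabs (lm m)) N).
      { unfold S_op, g. rewrite T_scale, HT.
        rewrite (Series_fin _ N).
        - rewrite <- sum_n_scal. apply sum_n_ext_loc. intros m Hm.
          unfold al; destruct (Compare_dec.le_dec m N); try lia.
          rewrite <- sgn_mul. req; ring.
        - intros m Hm. unfold al; destruct (Compare_dec.le_dec m N); try lia. ring. }
      apply H1. exists g. split; [apply Hg|split; [apply Hg|]].
      rewrite HS. rewrite Rabs_right; auto.
      apply Rle_ge, Rmult_le_pos; [left; apply Rinv_0_lt_compat; auto|].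
      replace 0 with (sum_n (fun _ => 0) N) by (rewrite sum_n_const; simpl; ring).
      apply sum_n_le. intros; apply Rabs_pos. }
  unfold l1norm. destruct D as [Dv| |] eqn:ED.
  - simpl. simpl in HN.
    assert (Rbar_le (Series (fun n => Rabs (lm n))) (K * Dv)).
    { apply (is_lim_seq_le (sum_n (fun m => Rabs (lm m))) (fun _ => K * Dv)).
      - intros N. specialize (HN N).
        apply Rmult_le_compat_l with (r := K) in HN; [|lra].
        generalize (sum_n (fun m : nat => Rabs (lm m)) N) HN. intros r Hr. change R in r.
        replace (K * (/ K * r)) with r in Hr by (field; lra). exact Hr.
      - apply is_lim_seq_Series, Hlm.
      - apply is_lim_seq_const. }
    simpl in H0. apply Rmult_le_reg_l with K; auto.
    replace (K * (/ K * Series (fun n : nat => Rabs (lm n)))) with (Series (fun n : nat => Rabs (lm n))) by (req; field; lra). exact H0.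
  - simpl; auto.
  - specialize (HN 0%nat). simpl in HN. contradiction.
Qed.


Lemma mol_close A B dn dm r p q : 0 < r -> r <= dn -> 0 < dm -> Rabs B <= dm ->
  Rabs (A - B) <= p -> Rabs (dn - dm) <= q -> Rabs (A / dn - B / dm) <= (p + q) / r.
Proof.
  intros Hr Hdn Hdm HB HAB Hq.
  assert (E : A / dn - B / dm = ((A - B) + B * (dm - dn) / dm) / dn) by (field; lra).
  rewrite E, Rabs_div by lra. rewrite (Rabs_right dn) by lra.
  assert (H1 : Rabs (B * (dm - dn) / dm) <= q).
  { rewrite Rabs_div by lra. rewrite Rabs_mult, (Rabs_right dm) by lra.
    apply Rle_div_l; [lra|]. rewrite Rabs_minus_sym in Hq.
    pose proof (Rabs_pos B). pose proof (Rabs_pos (dm - dn)). nra. }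
  assert (H2 : Rabs (A - B + B * (dm - dn) / dm) <= p + q).
  { eapply Rle_trans; [apply Rabs_triang|]. lra. }
  pose proof (Rabs_pos (A - B + B * (dm - dn) / dm)).
  apply Rle_trans with ((p + q) / dn).
  - unfold Rdiv. apply Rmult_le_compat_r; [left; apply Rinv_0_lt_compat; lra|]. auto.
  - unfold Rdiv. apply Rmult_le_compat_l; [lra|]. apply Rinv_le_contravar; lra.
Qed.

Lemma dn_to0 (Hcpt : mcompact d) J : E2 J -> forall r, 0 < r -> exists N, forall n, (N <= n)%nat -> d (xs n) (ys n) < r.
Proof.
  intros [HJ0 HJ] r Hr. apply NNPP. intros Hno.
  assert (Hphi : forall N, exists n, (N <= n)%nat /\ r <= d (xs n) (ys n)).
  { intros N. apply NNPP; intros H. apply Hno. exists N. intros n Hn.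
    apply Rnot_le_lt. intros H'. apply H. exists n; auto. }
  destruct (choice_fun _ Hphi) as [phi Hph].
  set (rho := J * r / 8).
  assert (Hrho : 0 < rho) by (unfold rho; apply Rdiv_lt_0_compat; [nra|lra]).
  destruct (Hcpt X (fun c u => d c u < rho)) as [l Hl].
  - intros c u Hu. exists (rho - d c u). split; [lra|]. intros w Hw.
    pose proof (d_tri c u w). lra.
  - intros u. exists u. rewrite d_uu; auto.
  - destruct (choice_fun (fun u c => In c l /\ d c u < rho) Hl) as [cen Hcen].
    set (psi := fix psi k := match k with O => phi O | S k' => phi (S (psi k')) end).
    assert (Hps1 : forall k, r <= d (xs (psi k)) (ys (psi k))).
    { intros [|k]; simpl; apply Hph. }
    assert (Hps2 : forall k j, (psi k < psi (S j + k))%nat).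
    { intros k j; induction j.
      - simpl. pose proof (proj1 (Hph (S (psi k)))). lia.
      - change (psi ((S (S j) + k)%nat)) with (phi (S (psi ((S j + k)%nat)))).
        pose proof (proj1 (Hph (S (psi ((S j + k)%nat))))). lia. }
    assert (Hinj : forall k k', psi k = psi k' -> k = k').
    { intros k k' E. destruct (Nat.lt_total k k') as [H|[H|H]]; auto.
      - pose proof (Hps2 k (k' - S k)%nat). replace (S (k' - S k) + k)%nat with k' in H0 by lia. lia.
      - pose proof (Hps2 k' (k - S k')%nat). replace (S (k - S k') + k')%nat with k in H0 by lia. lia. }
    set (K := length l).
    set (F := fun k => (cen (xs (psi k)), cen (ys (psi k)))).
    assert (HnD : ~ NoDup (map F (seq 0 (K * K + 1)))).
    { intros HN. apply NoDup_incl_length with (l' := list_prod l l) in HN.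
      - rewrite length_map, length_seq, length_prod in HN. unfold K in HN. lia.
      - intros p Hp. apply in_map_iff in Hp. destruct Hp as [k [<- _]].
        unfold F. apply in_prod; apply Hcen. }
    assert (Hpair : exists k k', k <> k' /\ F k = F k').
    { apply NNPP; intros H. apply HnD. apply NoDup_map_NoDup_ForallPairs; [|apply seq_NoDup].
      intros k k' _ _ E. apply NNPP; intros H'. apply H. exists k, k'; auto. }
    destruct Hpair as [k [k' [Hkk' HF]]].
    set (n := psi k). set (m := psi k').
    assert (Hnm : n <> m) by (intros E; apply Hkk', Hinj, E).
    unfold F in HF. injection HF as Hcx Hcy.
    set (lm := fun j => if Nat.eq_dec j n then 1 else if Nat.eq_dec j m then -1 else 0).
    set (N := Nat.max n m).
    assert (Hz : forall j, (N < j)%nat -> lm j = 0).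
    { intros j Hj. unfold lm. destruct (Nat.eq_dec j n); [lia|]. destruct (Nat.eq_dec j m); [lia|auto]. }
    assert (Hl1 : in_l1 lm).
    { apply (ex_series_fin _ N). intros j Hj. rewrite Hz; auto. apply Rabs_R0. }
    assert (Hnorm : l1norm lm = 2).
    { unfold l1norm. rewrite (Series_fin _ N) by (intros j Hj; rewrite Hz; auto; apply Rabs_R0).
      rewrite (sum_n_ext _ (fun j => plus (if Nat.eq_dec j n then 1 else 0) (if Nat.eq_dec j m then 1 else 0))).
      - rewrite sum_n_plus, !sum_delta. unfold N.
        destruct (Compare_dec.le_dec n (Nat.max n m)); [|lia].
        destruct (Compare_dec.le_dec m (Nat.max n m)); [|lia]. unfold plus; simpl; lra.
      - intros j. unfold lm, plus; simpl. destruct (Nat.eq_dec j n), (Nat.eq_dec j m); subst; try lia.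
        + rewrite Rabs_R1; lra.
        + rewrite Rabs_left; lra.
        + rewrite Rabs_R0; lra. }
    assert (HB : Rbar_le (dual_norm d x0 (S_op d xs ys lm)) J).
    { unfold dual_norm. destruct (Lub_Rbar_correct (fun r => exists f, Lip0 d x0 f /\ lipnorm_le d f 1 /\
         r = Rabs (S_op d xs ys lm f))) as [_ H2].
      apply H2. intros z [g [_ [Hg ->]]]. simpl. apply lipnorm_LipC in Hg.
      unfold S_op. rewrite (Series_fin _ N) by (intros j Hj; rewrite Hz; auto; apply Rmult_0_l).
      rewrite (sum_n_ext _ (fun j => plus (if Nat.eq_dec j n then Tinterp d xs ys g n else 0)
                                         (if Nat.eq_dec j m then - Tinterp d xs ys g m else 0))).
      - rewrite sum_n_plus, !sum_delta. unfold N.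
        destruct (Compare_dec.le_dec n (Nat.max n m)); [|lia].
        destruct (Compare_dec.le_dec m (Nat.max n m)); [|lia]. unfold plus; simpl.
        unfold Tinterp.
        replace J with ((4 * rho + 4 * rho) / r) by (unfold rho; field; lra).
        pose proof (Hcen (xs n)) as [_ C1]. pose proof (Hcen (xs m)) as [_ C2].
        pose proof (Hcen (ys n)) as [_ C3]. pose proof (Hcen (ys m)) as [_ C4].
        unfold n, m in *. rewrite Hcx in C1. rewrite Hcy in C3.
        set (c1 := cen (xs (psi k'))) in *. set (c2 := cen (ys (psi k'))) in *.
        assert (Dx : d (xs (psi k)) (xs (psi k')) <= 2 * rho).
        { pose proof (d_tri (xs (psi k)) c1 (xs (psi k'))). rewrite (d_sym (xs (psi k)) c1) in H. lra. }
        assert (Dy : d (ys (psi k)) (ys (psi k')) <= 2 * rho).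
        { pose proof (d_tri (ys (psi k)) c2 (ys (psi k'))). rewrite (d_sym (ys (psi k)) c2) in H. lra. }
        replace (Rabs ((g (xs (psi k)) - g (ys (psi k))) / d (xs (psi k)) (ys (psi k)) +
                       - ((g (xs (psi k')) - g (ys (psi k'))) / d (xs (psi k')) (ys (psi k')))))
          with (Rabs ((g (xs (psi k)) - g (ys (psi k))) / d (xs (psi k)) (ys (psi k)) -
                       ((g (xs (psi k')) - g (ys (psi k'))) / d (xs (psi k')) (ys (psi k'))))) by (f_equal; ring).
        apply mol_close; auto.
        + apply dn_pos'.
        + specialize (Hg (xs (psi k')) (ys (psi k'))). lra.
        + replace (g (xs (psi k)) - g (ys (psi k)) - (g (xs (psi k')) - g (ys (psi k'))))
            with ((g (xs (psi k)) - g (xs (psi k'))) - (g (ys (psi k)) - g (ys (psi k')))) by ring.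
          eapply Rle_trans; [apply Rabs_triang|]. rewrite Rabs_Ropp.
          pose proof (Hg (xs (psi k)) (xs (psi k'))). pose proof (Hg (ys (psi k)) (ys (psi k'))). lra.
        + apply Rabs_le. pose proof (d_tri (xs (psi k)) (xs (psi k')) (ys (psi k))).
          pose proof (d_tri (xs (psi k')) (ys (psi k')) (ys (psi k))).
          pose proof (d_tri (xs (psi k')) (xs (psi k)) (ys (psi k'))).
          pose proof (d_tri (xs (psi k)) (ys (psi k)) (ys (psi k'))).
          rewrite (d_sym (xs (psi k')) (xs (psi k))) in *. rewrite (d_sym (ys (psi k')) (ys (psi k))) in *.
          lra.
      - intros j. unfold lm, plus; simpl. destruct (Nat.eq_dec j n), (Nat.eq_dec j m); subst; try lia; req; ring. }
    pose proof (Rbar_le_trans _ _ _ (HJ _ Hl1) HB) as H. simpl in H. rewrite Hnorm in H. lra.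
Qed.

Lemma T_c0 (Hcpt : mcompact d) J g : E2 J -> littleL g -> in_c0 (Tinterp d xs ys g).
Proof.
  intros HE hg. unfold in_c0. apply is_lim_seq_spec. intros eps.
  destruct (hg (eps / 2)) as [del [Hdel H]]; [pose proof (cond_pos eps); lra|].
  destruct (dn_to0 Hcpt J HE del Hdel) as [N HN]. exists N. intros n Hn.
  rewrite Rminus_0_r. unfold Tinterp. pose proof (dn_pos' n).
  rewrite Rabs_div by lra. rewrite (Rabs_right (d (xs n) (ys n))) by lra.
  apply Rle_lt_trans with (eps / 2); [|pose proof (cond_pos eps); lra].
  apply Rle_div_l; [lra|]. apply H, HN, Hn.
Qed.


Fixpoint ssum (s : nat -> R) k := match k with O => 0 | S k' => ssum s k' + s k' end.

Lemma ssum_abs (s : nat -> R) k : Rabs (ssum s k) <= ssum (fun i => Rabs (s i)) k.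
Proof.
  induction k; simpl; [rewrite Rabs_R0; lra|].
  eapply Rle_trans; [apply Rabs_triang|]. lra.
Qed.

Lemma ssum_div (s : nat -> R) c k : ssum (fun i => s i / c) k = ssum s k / c.
Proof. induction k; cbn [ssum]; [unfold Rdiv; ring|]. rewrite IHk. unfold Rdiv; ring. Qed.

Lemma ssum_le (s s' : nat -> R) k : (forall i, s i <= s' i) -> ssum s k <= ssum s' k.
Proof. intros H; induction k; simpl; [lra|]. specialize (H k); lra. Qed.

Lemma ssum_minus_const (s : nat -> R) c k : ssum (fun i => s i - c) k = ssum s k - INR k * c.
Proof. induction k; cbn [ssum]; [simpl; ring|]. rewrite IHk, S_INR. ring. Qed.

Lemma slope_sum (s D del : nat -> R) t G B :
  G <= B ->
  (forall i, (D i <= t \/ t < del i) -> s i <= G) ->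
  (forall i, s i <= B) ->
  (forall i, D (S i) <= del i /\ D (S i) <= D i) ->
  forall k, ssum s k <= INR k * G + (if Rlt_dec t (D k) then 0 else B - G).
Proof.
  intros HGB Hgood Hbad HD k. induction k.
  - simpl. destruct (Rlt_dec t (D 0%nat)); lra.
  - simpl ssum. rewrite S_INR. destruct (HD k) as [HD1 HD2].
    destruct (Rlt_dec t (D (S k))) as [h1|h1].
    + destruct (Rlt_dec t (D k)) as [h2|h2]; [|lra].
      assert (s k <= G) by (apply Hgood; right; lra). lra.
    + destruct (Rlt_dec t (D k)) as [h2|h2].
      * specialize (Hbad k). lra.
      * assert (s k <= G) by (apply Hgood; left; lra). lra.
Qed.

Fixpoint rmin (k : nat) : R := match k with O => 1 | S k' => Rmin (rmin k') (d (xs k') (ys k')) end.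
Lemma rmin_spec k : 0 < rmin k /\ forall n, (n < k)%nat -> rmin k <= d (xs n) (ys n).
Proof.
  induction k; simpl.
  - split; [lra|]. intros; lia.
  - destruct IHk as [H1 H2]. split.
    + apply Rmin_pos; auto. apply dn_pos'.
    + intros n Hn. destruct (Nat.eq_dec n k) as [->|Hnk].
      * apply Rmin_r.
      * eapply Rle_trans; [apply Rmin_l|]. apply H2. lia.
Qed.

Section Approx.
Hypothesis Hcpt : mcompact d.
Variable aa : R.
Hypothesis Haa : 1 < aa.
Hypothesis Hsepa : forall x y, exists f, lip0 d x0 f /\ lipnorm_le d f aa /\ Rabs (f x - f y) = d x y.
Variable J : R.
Hypothesis HE : E2 J.

Fixpoint gsumf (g : nat -> X -> R) k u := match k with O => 0 | S k' => gsumf g k' u + g k' u end.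

Lemma approx_step beta : in_c0 beta -> sup_le1 beta -> forall eps, 0 < eps <= 1 ->
  exists h, h x0 = 0 /\ LipC h (/ J * (1 + eps)) /\ littleL h /\
    forall n, Rabs (Tinterp d xs ys h n - beta n) <= 2 * eps.
Proof.
  intros Hb0 Hb1 eps Heps.
  set (L := / J).
  assert (HL1 : 1 <= L) by (apply E2_le1, HE).
  destruct (proj2 (is_lim_seq_spec _ _) Hb0 (mkposreal (eps / 2) ltac:(lra))) as [N HN]. simpl in HN.
  set (beta' := fun m => if Compare_dec.le_dec N m then 0 else beta m).
  destruct (E2_sol J HE beta') as [f [[Hf0 _] [Hf HTf]]].
  { intros m; unfold beta'; destruct (Compare_dec.le_dec N m); [rewrite Rabs_R0; lra|apply Hb1]. }
  apply lipnorm_LipC in Hf. fold L in Hf.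
  destruct (rmin_spec N) as [Hr0 Hr].
  set (c := eps / 4).
  assert (HG : forall D, exists p : (X -> R) * R, 0 < D ->
     (snd p > 0 /\ (fst p) x0 = 0 /\ LipC (fst p) (aa * L) /\ littleL (fst p) /\
      (forall u, Rabs (fst p u - f u) <= c * D) /\
      forall u v, d u v < snd p -> Rabs (fst p u - fst p v) <= eps / 2 * d u v)).
  { intros D. destruct (Rlt_dec 0 D) as [HD|HD].
    - destruct (lattice_approx aa Haa Hsepa Hcpt f L ltac:(lra) Hf Hf0 (c * D)) as [g [Hg0 [HgL [hg Hgf]]]].
      { unfold c; apply Rmult_lt_0_compat; lra. }
      destruct (hg (eps / 2)) as [del [Hdel Hgd]]; [lra|].
      exists (g, del). intros _. simpl. repeat split; auto.
    - exists ((fun _ => 0), 0). intros H; lra. }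
  destruct (choice_fun _ HG) as [Gf HGf].
  set (Dseq := fix Dseq i := match i with O => rmin N | S i' => Rmin (Dseq i') (snd (Gf (Dseq i'))) end).
  assert (HDpos : forall i, 0 < Dseq i).
  { induction i; simpl; auto. apply Rmin_pos; auto. apply (HGf _ IHi). }
  set (gi := fun i => fst (Gf (Dseq i))). set (deli := fun i => snd (Gf (Dseq i))).
  assert (HGi : forall i, deli i > 0 /\ gi i x0 = 0 /\ LipC (gi i) (aa * L) /\ littleL (gi i) /\
      (forall u, Rabs (gi i u - f u) <= c * Dseq i) /\
      forall u v, d u v < deli i -> Rabs (gi i u - gi i v) <= eps / 2 * d u v).
  { intros i. apply HGf, HDpos. }
  assert (HDD : forall i, Dseq (S i) <= deli i /\ Dseq (S i) <= Dseq i).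
  { intros i. simpl. split; [apply Rmin_r|apply Rmin_l]. }
  destruct (INR_unbounded (2 * (aa + 1) * (L + 1) / eps)) as [k Hk].
  assert (Hkpos : 0 < INR k).
  { eapply Rlt_trans; [|apply Hk]. apply Rdiv_lt_0_compat; [|lra]. nra. }
  assert (Hk1 : (aa + 1) * L / INR k <= eps / 2 * L).
  { apply Rle_div_l; auto.
    assert (2 * (aa + 1) * (L + 1) < INR k * eps).
    { apply Rle_lt_trans with (2 * (aa + 1) * (L + 1) / eps * eps). right; field; lra.
      apply Rmult_lt_compat_r; lra. }
    nra. }
  assert (Hk2 : (aa * L + 1) / INR k <= eps).
  { apply Rle_div_l; auto.
    assert (2 * (aa + 1) * (L + 1) < INR k * eps).
    { apply Rle_lt_trans with (2 * (aa + 1) * (L + 1) / eps * eps). right; field; lra.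
      apply Rmult_lt_compat_r; lra. }
    nra. }
  set (h := fun u => gsumf gi k u / INR k).
  assert (Hgs0 : forall k, gsumf gi k x0 = 0).
  { induction k0; simpl; auto. rewrite IHk0. destruct (HGi k0) as [_ [-> _]]. ring. }
  assert (Hgsd : forall k u v, gsumf gi k u - gsumf gi k v = ssum (fun i => gi i u - gi i v) k).
  { induction k0; intros; simpl; [ring|]. rewrite <- IHk0. ring. }
  assert (Hgsl : forall k, littleL (gsumf gi k)).
  { induction k0; simpl.
    - apply (const_good 0 0); lra.
    - apply (littleL_plus (gsumf gi k0) (gi k0)); auto. apply HGi. }
  exists h. split; [|split; [|split]].
  - unfold h. rewrite Hgs0. unfold Rdiv; ring.
  - intros u v. destruct (classic (u = v)) as [->|Huv].
    + rewrite Rminus_eq_0, Rabs_R0, d_uu. lra.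
    + set (t := d u v). assert (Ht : 0 < t) by (apply d_pos; auto).
      assert (Hs := slope_sum (fun i => Rabs (gi i u - gi i v)) Dseq deli t (L * (1 + eps / 2) * t) ((aa + 1) * L * t)).
      assert (Hsk : ssum (fun i => Rabs (gi i u - gi i v)) k <= INR k * (L * (1 + eps / 2) * t) + (aa + 1) * L * t).
      { eapply Rle_trans; [apply Hs|].
        - apply Rmult_le_compat_r; [lra|nra].
        - intros i [Hi|Hi].
          + destruct (HGi i) as [_ [_ [_ [_ [Hgf _]]]]].
            pose proof (Hgf u). pose proof (Hgf v). pose proof (Hf u v). fold t in H1.
            replace (gi i u - gi i v) with ((gi i u - f u) - (gi i v - f v) + (f u - f v)) by ring.
            eapply Rle_trans; [apply Rabs_triang|]. eapply Rle_trans; [apply Rplus_le_compat_r, Rabs_triang|].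
            rewrite Rabs_Ropp. assert (c * Dseq i <= c * t) by (apply Rmult_le_compat_l; unfold c; lra).
            unfold c in *. assert (0 <= (L - 1) * (eps * t)) by (apply Rmult_le_pos; nra). nra.
          + destruct (HGi i) as [_ [_ [_ [_ [_ Hsm]]]]]. eapply Rle_trans; [apply Hsm; auto|]. fold t. apply Rmult_le_compat_r; [lra|nra].
        - intros i. destruct (HGi i) as [_ [_ [HL' _]]]. eapply Rle_trans; [apply HL'|]. fold t. apply Rmult_le_compat_r; [lra|nra].
        - apply HDD.
        - assert (0 <= L * (1 + eps / 2) * t) by (apply Rmult_le_pos; [apply Rmult_le_pos|]; lra). assert (0 <= (aa + 1) * L * t) by (apply Rmult_le_pos; [apply Rmult_le_pos|]; lra). destruct (Rlt_dec t (Dseq k)); lra. }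
      unfold h. replace (gsumf gi k u / INR k - gsumf gi k v / INR k) with ((gsumf gi k u - gsumf gi k v) / INR k) by (field; lra).
      rewrite Rabs_div by lra. rewrite (Rabs_right (INR k)) by lra. apply Rle_div_l; auto.
      rewrite Hgsd. eapply Rle_trans; [apply ssum_abs|]. eapply Rle_trans; [apply Hsk|].
      fold t. fold L. assert ((aa + 1) * L <= eps / 2 * L * INR k).
      { apply (Rle_div_l _ _ _ Hkpos) in Hk1. exact Hk1. }
      nra.
  - unfold h. intros e He. destruct (Hgsl k (e * INR k)) as [del [Hdel Hdl]]; [nra|].
    exists del; split; auto. intros u v Huv.
    replace (gsumf gi k u / INR k - gsumf gi k v / INR k) with ((gsumf gi k u - gsumf gi k v) / INR k) by (field; lra).
    rewrite Rabs_div by lra. rewrite (Rabs_right (INR k)) by lra. apply Rle_div_l; auto.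
    eapply Rle_trans; [apply Hdl; auto|]. right; ring.
  - intros n.
    assert (HDmono : forall i, Dseq i <= rmin N).
    { induction i; simpl; [lra|]. eapply Rle_trans; [apply Rmin_l|]. auto. }
    pose proof (dn_pos' n) as Hdn.
    assert (Th : Tinterp d xs ys h n = ssum (fun i => Tinterp d xs ys (gi i) n) k / INR k).
    { unfold Tinterp, h. rewrite ssum_div.
      replace ((gsumf gi k (xs n) / INR k - gsumf gi k (ys n) / INR k) / d (xs n) (ys n))
        with ((gsumf gi k (xs n) - gsumf gi k (ys n)) / d (xs n) (ys n) / INR k) by (field; lra).
      rewrite Hgsd; auto. }
    assert (Th2 : Tinterp d xs ys h n - beta n = ssum (fun i => Tinterp d xs ys (gi i) n - beta n) k / INR k).
    { rewrite Th, ssum_minus_const. field. lra. }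
    rewrite Th2, Rabs_div by lra. rewrite (Rabs_right (INR k)) by lra. apply Rle_div_l; auto.
    eapply Rle_trans; [apply ssum_abs|].
    assert (Hs := slope_sum (fun i => Rabs (Tinterp d xs ys (gi i) n - beta n)) Dseq deli (d (xs n) (ys n)) eps (aa * L + 1)).
    assert (HTfn : Tinterp d xs ys f n = beta' n) by (rewrite HTf; auto).
    assert (HgoodA : forall i, Dseq i <= d (xs n) (ys n) -> Rabs (Tinterp d xs ys (gi i) n - beta n) <= eps).
    { intros i Hi. destruct (HGi i) as [_ [_ [_ [_ [Hgf _]]]]].
      assert (HA : Rabs (Tinterp d xs ys (gi i) n - Tinterp d xs ys f n) <= eps / 2).
      { unfold Tinterp.
        replace ((gi i (xs n) - gi i (ys n)) / d (xs n) (ys n) - (f (xs n) - f (ys n)) / d (xs n) (ys n))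
          with (((gi i (xs n) - f (xs n)) - (gi i (ys n) - f (ys n))) / d (xs n) (ys n)) by (field; lra).
        rewrite Rabs_div by lra. rewrite (Rabs_right (d (xs n) (ys n))) by lra. apply Rle_div_l; auto.
        eapply Rle_trans; [apply Rabs_triang|]. rewrite Rabs_Ropp.
        pose proof (Hgf (xs n)). pose proof (Hgf (ys n)). unfold c in *.
        assert (eps / 4 * Dseq i <= eps / 4 * d (xs n) (ys n)) by (apply Rmult_le_compat_l; lra). lra. }
      rewrite HTfn in HA. unfold beta' in HA. destruct (Compare_dec.le_dec N n) as [HNn|HNn].
      + specialize (HN n HNn). rewrite Rminus_0_r in HN, HA.
        replace (Tinterp d xs ys (gi i) n - beta n) with (Tinterp d xs ys (gi i) n + - beta n) by ring.
        eapply Rle_trans; [apply Rabs_triang|]. rewrite Rabs_Ropp. lra.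
      + lra. }
    eapply Rle_trans; [apply Hs|].
    + pose proof (Rmult_le_compat_l aa 1 L ltac:(lra) HL1). lra.
    + intros i [Hi|Hi]; [apply HgoodA; auto|].
      destruct (Compare_dec.le_dec N n) as [HNn|HNn].
      * destruct (HGi i) as [_ [_ [_ [_ [_ Hsm]]]]].
        specialize (Hsm (xs n) (ys n) Hi). specialize (HN n HNn). rewrite Rminus_0_r in HN.
        assert (Rabs (Tinterp d xs ys (gi i) n) <= eps / 2).
        { unfold Tinterp. rewrite Rabs_div by lra. rewrite (Rabs_right (d (xs n) (ys n))) by lra.
          apply Rle_div_l; auto. }
        replace (Tinterp d xs ys (gi i) n - beta n) with (Tinterp d xs ys (gi i) n + - beta n) by ring.
        eapply Rle_trans; [apply Rabs_triang|]. rewrite Rabs_Ropp. lra.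
      * apply HgoodA. eapply Rle_trans; [apply HDmono|]. apply Hr. lia.
    + intros i. destruct (HGi i) as [_ [_ [HL' _]]].
      assert (Rabs (Tinterp d xs ys (gi i) n) <= aa * L).
      { unfold Tinterp. rewrite Rabs_div by lra. rewrite (Rabs_right (d (xs n) (ys n))) by lra.
        apply Rle_div_l; auto. }
      replace (Tinterp d xs ys (gi i) n - beta n) with (Tinterp d xs ys (gi i) n + - beta n) by ring.
      eapply Rle_trans; [apply Rabs_triang|]. rewrite Rabs_Ropp. specialize (Hb1 n). lra.
    + apply HDD.
    + assert (0 <= aa * L + 1) by nra.
      apply (Rle_div_l _ _ _ Hkpos) in Hk2.
      destruct (Rlt_dec (d (xs n) (ys n)) (Dseq k)); nra.
Qed.


Lemma tele_series (u : nat -> R) : is_lim_seq u 0 -> is_series (fun k => u k - u (S k)) (u 0%nat).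
Proof.
  intros Hu.
  assert (H' : is_lim_seq (sum_n (fun k => u k - u (S k))) (u 0%nat)); [|exact H'].
  apply (is_lim_seq_ext (fun N => u 0%nat - u (S N))).
  - intros N; induction N.
    + rewrite sum_O. reflexivity.
    + rewrite sum_Sn, <- IHN. unfold plus; simpl. ring.
  - replace (Finite (u 0%nat)) with (Finite (u 0%nat - 0)) by (f_equal; ring).
    apply is_lim_seq_minus'; [apply is_lim_seq_const|].
    apply (is_lim_seq_incr_1 u 0). auto.
Qed.

Lemma exact_c0 theta : 0 < theta < 1 / 2 -> forall al, in_c0 al -> sup_le1 al ->
  exists F, lip0 d x0 F /\ LipC F (/ J * (1 + theta) / (1 - 2 * theta)) /\ Tinterp d xs ys F = al.
Proof.
  intros Hth al Hal0 Hal1.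
  set (L := / J). set (q := 2 * theta).
  assert (Hq : 0 < q < 1) by (unfold q; lra).
  assert (HL1 : 1 <= L) by (apply E2_le1, HE).
  assert (HH : forall beta, exists h, (in_c0 beta /\ sup_le1 beta) -> (h x0 = 0 /\ LipC h (L * (1 + theta)) /\ littleL h /\
             forall n, Rabs (Tinterp d xs ys h n - beta n) <= 2 * theta)).
  { intros beta. destruct (classic (in_c0 beta /\ sup_le1 beta)) as [[H1 H2]|Hn].
    - destruct (approx_step beta H1 H2 theta ltac:(lra)) as [h Hh]. exists h; auto.
    - exists (fun _ => 0). intros H; contradiction. }
  destruct (choice_fun _ HH) as [Hf HHf].
  set (rseq := fix rseq k := match k with O => al | S k' =>
         fun n => rseq k' n - q ^ k' * Tinterp d xs ys (Hf (fun m => rseq k' m / q ^ k')) n end).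
  set (bk := fun k m => rseq k m / q ^ k).
  assert (Hqk : forall k, 0 < q ^ k) by (intros; apply pow_lt; lra).
  assert (rS : forall k n, rseq (S k) n = rseq k n - q ^ k * Tinterp d xs ys (Hf (bk k)) n) by reflexivity.
  assert (Hbk_of : forall k, (in_c0 (rseq k) /\ forall n, Rabs (rseq k n) <= q ^ k) -> in_c0 (bk k) /\ sup_le1 (bk k)).
  { intros k [H1 H2]. split.
    - unfold in_c0. apply (is_lim_seq_ext (fun m => rseq k m * / q ^ k)); [intros; unfold bk, Rdiv; auto|].
      replace (Finite 0) with (Rbar_mult 0 (/ q ^ k)) by (simpl; f_equal; ring).
      apply is_lim_seq_scal_r; auto.
    - intros m. unfold bk. rewrite Rabs_div by (apply Rgt_not_eq, Hqk). rewrite (Rabs_right (q ^ k)) by (left; apply Hqk).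
      apply Rle_div_l; [apply Hqk|]. rewrite Rmult_1_l. auto. }
  assert (Inv : forall k, in_c0 (rseq k) /\ forall n, Rabs (rseq k n) <= q ^ k).
  { induction k as [|k IH].
    - split; [exact Hal0| intros n; exact (Hal1 n)].
    - destruct (HHf (bk k) (Hbk_of k IH)) as [h0 [hL [hl hT]]]. destruct IH as [IH1 IH2]. split.
      + unfold in_c0. apply (is_lim_seq_ext (fun n => rseq k n - q ^ k * Tinterp d xs ys (Hf (bk k)) n)); [intros; symmetry; apply rS|].
        replace (Finite 0) with (Finite (0 - 0)) by (f_equal; ring).
        apply is_lim_seq_minus'; auto.
        replace (Finite 0) with (Rbar_mult (q ^ k) 0) by (simpl; f_equal; ring).
        apply is_lim_seq_scal_l. apply (T_c0 Hcpt J _ HE hl).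
      + intros n. rewrite rS.
        replace (rseq k n - q ^ k * Tinterp d xs ys (Hf (bk k)) n) with (q ^ k * (bk k n - Tinterp d xs ys (Hf (bk k)) n))
          by (unfold bk; field; apply Rgt_not_eq, Hqk).
        rewrite Rabs_mult, (Rabs_right (q ^ k)) by (left; apply Hqk). rewrite Rabs_minus_sym.
        specialize (hT n). simpl. unfold q in *. pose proof (Hqk k). nra. }
  assert (Hprops : forall k, Hf (bk k) x0 = 0 /\ LipC (Hf (bk k)) (L * (1 + theta)) /\ littleL (Hf (bk k)) /\
             forall n, Rabs (Tinterp d xs ys (Hf (bk k)) n - bk k n) <= 2 * theta).
  { intros k. apply HHf, Hbk_of, Inv. }
  set (fk := fun k u => q ^ k * Hf (bk k) u).
  assert (HC : 0 <= L * (1 + theta)) by nra.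
  pose proof (series_fun fk q (L * (1 + theta)) ltac:(lra) HC) as HS.
  destruct HS as [F0 [FL [Fl Fex]]].
  - intros k. unfold fk. rewrite (proj1 (Hprops k)). ring.
  - intros k. unfold fk. pose proof (scale_LipC _ _ (q ^ k) (proj1 (proj2 (Hprops k)))) as H.
    rewrite (Rabs_right (q ^ k)) in H by (left; apply Hqk). exact H.
  - intros k. apply littleL_scale, Hprops.
  - set (F := fun u => Series (fun k => fk k u)) in *.
    exists F. split; [|split].
    + apply lip0_iff. split; auto. split; auto. exists (L * (1 + theta) / (1 - q)). auto.
    + unfold q in FL. exact FL.
    + apply functional_extensionality. intros n. pose proof (dn_pos' n) as Hdn.
      unfold Tinterp at 1.
      replace ((F (xs n) - F (ys n)) / d (xs n) (ys n)) with
        (Series (fun k => (fk k (xs n) - fk k (ys n)) * / d (xs n) (ys n))).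
      2: { rewrite Series_scal_r. unfold F. rewrite Series_minus; auto. }
      rewrite (Series_ext _ (fun k => rseq k n - rseq (S k) n)).
      2: { intros k. rewrite rS. unfold fk, Tinterp. field. lra. }
      apply is_series_unique. apply (tele_series (fun k => rseq k n)).
      apply (is_lim_seq_le_le (fun k => - q ^ k) _ (fun k => q ^ k)).
      * intros k. pose proof (proj2 (Inv k) n). apply abs_le_iff in H. lra.
      * assert (Hg := proj1 (is_lim_seq_opp _ _) (is_lim_seq_geom q ltac:(rewrite Rabs_right; lra))).
        simpl in Hg. rewrite Ropp_0 in Hg. exact Hg.
      * apply is_lim_seq_geom. rewrite Rabs_right; lra.
Qed.

Lemma E3_of_E2 K' : / J < K' -> forall al, in_c0 al -> sup_le1 al ->
  exists f, lip0 d x0 f /\ lipnorm_le d f K' /\ Tinterp d xs ys f = al.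
Proof.
  intros HK al H1 H2.
  set (L := / J). assert (HL1 : 1 <= L) by (apply E2_le1, HE).
  set (theta := Rmin (1 / 4) ((K' - L) / (L + 2 * K'))).
  assert (Hth : 0 < theta < 1 / 2).
  { unfold theta. split; [apply Rmin_pos; [lra|apply Rdiv_lt_0_compat; unfold L in *; lra]|].
    eapply Rle_lt_trans; [apply Rmin_l|lra]. }
  destruct (exact_c0 theta Hth al H1 H2) as [F [HF1 [HF2 HF3]]].
  exists F. split; auto. split; auto. apply LipC_lipnorm. eapply LipC_mono; [|exact HF2].
  fold L. apply Rle_div_l; [lra|].
  assert (theta <= (K' - L) / (L + 2 * K')) by apply Rmin_r.
  apply Rle_div_r in H; [|unfold L in *; lra]. nra.
Qed.


End Approx.


Lemma c0_bounded a : in_c0 a -> exists B, 0 < B /\ forall n, Rabs (a n) <= B.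
Proof.
  intros Ha. destruct (proj2 (is_lim_seq_spec _ _) Ha (mkposreal 1 ltac:(lra))) as [N HN].
  exists (ssum (fun i => Rabs (a i)) N + 1).
  assert (Hnn : forall k, 0 <= ssum (fun i => Rabs (a i)) k).
  { induction k; simpl; [lra|]. pose proof (Rabs_pos (a k)); lra. }
  split; [pose proof (Hnn N); lra|].
  intros n. destruct (Compare_dec.le_dec N n) as [h|h].
  - specialize (HN n h). simpl in HN. rewrite Rminus_0_r in HN. pose proof (Hnn N). lra.
  - assert (forall k, (n < k)%nat -> Rabs (a n) <= ssum (fun i => Rabs (a i)) k).
    { induction k; intros Hk; [lia|]. simpl. destruct (Nat.eq_dec n k) as [->|h'].
      - pose proof (Hnn k); lra.
      - pose proof (IHk ltac:(lia)). pose proof (Rabs_pos (a k)). lra. }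
    pose proof (H N ltac:(lia)). lra.
Qed.

Section Assembly.
Hypothesis Hcpt : mcompact d.
Variable aa : R.
Hypothesis Haa : 1 < aa.
Hypothesis Hsepa : forall x y, exists f, lip0 d x0 f /\ lipnorm_le d f aa /\ Rabs (f x - f y) = d x y.

Definition E1 K := 1 <= K /\ forall a, in_linf a -> sup_le1 a ->
   exists f, Lip0 d x0 f /\ lipnorm_le d f K /\ Tinterp d xs ys f = a.
Definition E3 K := 0 < K /\ forall a, in_c0 a -> sup_le1 a ->
   exists f, lip0 d x0 f /\ lipnorm_le d f K /\ Tinterp d xs ys f = a.
Definition E4 K := 0 < K /\ forall a, in_c0 a -> sup_le1 a ->
   exists f, Lip0 d x0 f /\ lipnorm_le d f K /\ Tinterp d xs ys f = a.

Lemma E4_to_E2 K : E4 K -> E2 (/ K).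
Proof. intros [HK H]. apply E4_E2; auto. Qed.

Lemma E2_to_E1 J : E2 J -> E1 (/ J).
Proof.
  intros HE. split; [apply E2_le1; auto|]. intros a _ Ha. apply E2_sol; auto.
Qed.

Lemma E1_to_E4 K : E1 K -> E4 K.
Proof. intros [HK H]. split; [lra|]. intros a _ Ha. apply H; auto. exists 1; auto. Qed.

Lemma E3_to_E4 K : E3 K -> E4 K.
Proof.
  intros [HK H]. split; auto. intros a H1 H2. destruct (H a H1 H2) as [f [[Hf _] Hf']]. exists f; auto.
Qed.

Lemma E2_to_E3 J K : E2 J -> / J < K -> E3 K.
Proof.
  intros HE HK. split.
  - destruct HE as [HJ _]. pose proof (Rinv_0_lt_compat J HJ). lra.
  - intros a H1 H2. apply (E3_of_E2 Hcpt aa Haa Hsepa J HE K HK a H1 H2).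
Qed.

Lemma E4_iff_E1 K : E4 K <-> E1 K.
Proof.
  split; [|apply E1_to_E4]. intros H. pose proof (E2_to_E1 _ (E4_to_E2 _ H)) as H'.
  rewrite Rinv_inv in H'. auto.
Qed.

Lemma E2_iff_E4 J : 0 < J -> (E2 J <-> E4 (/ J)).
Proof.
  intros HJ. split.
  - intros H. apply E1_to_E4, E2_to_E1, H.
  - intros H. pose proof (E4_to_E2 _ H). rewrite Rinv_inv in H0. auto.
Qed.

Lemma inf_attained M : 0 < M -> is_inf E4 M -> E4 M.
Proof.
  intros HM [Hlb Hglb].
  assert (Happ : forall eps, 0 < eps -> exists K, E4 K /\ K < M + eps).
  { intros eps Heps. apply NNPP; intros Hn.
    assert (M + eps <= M); [|lra]. apply Hglb. intros x Hx. apply Rnot_lt_le. intros Hlt. apply Hn. exists x; auto. }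
  apply E4_iff_E1. rewrite <- (Rinv_inv M). apply E2_to_E1.
  split; [apply Rinv_0_lt_compat; auto|]. intros lm Hlm.
  set (D := dual_norm d x0 (S_op d xs ys lm)).
  assert (HK : forall eps, 0 < eps -> exists K, 0 < K /\ K < M + eps /\ Rbar_le (/ K * l1norm lm) D).
  { intros eps Heps. destruct (Happ eps Heps) as [K [HK1 HK2]]. exists K. split; [apply HK1|split; auto].
    apply (E4_to_E2 K HK1). auto. }
  destruct D as [Dv| |] eqn:ED; simpl; auto.
  - assert (Hl0 : 0 <= l1norm lm).
    { unfold l1norm. apply (Series_le (fun _ => 0) (fun n => Rabs (lm n))) in Hlm.
      - rewrite (Series_fin _ 0) in Hlm by auto. rewrite sum_O in Hlm. exact Hlm.
      - intros; split; [lra|apply Rabs_pos]. }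
    assert (Hb : forall eps, 0 < eps -> l1norm lm <= (M + eps) * Dv).
    { intros eps Heps. destruct (HK eps Heps) as [K [HK1 [HK2 HK3]]]. simpl in HK3.
      apply Rmult_le_compat_l with (r := K) in HK3; [|lra].
      replace (K * (/ K * l1norm lm)) with (l1norm lm) in HK3 by (field; lra).
      assert (0 <= Dv).
      { apply Rmult_le_reg_l with K; [lra|]. rewrite Rmult_0_r. 
        assert (0 <= / K * l1norm lm) by (apply Rmult_le_pos; [left; apply Rinv_0_lt_compat|]; lra).
        apply Rmult_le_compat_l with (r := K) in H; [|lra]. replace (K * (/ K * l1norm lm)) with (l1norm lm) in H by (field; lra).
        lra. }
      nra. }
    apply Rmult_le_reg_l with M; auto. replace (M * (/ M * l1norm lm)) with (l1norm lm) by (field; lra).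
    apply Rnot_lt_le. intros Hlt.
    assert (HDv : 0 <= Dv).
    { destruct (HK 1 ltac:(lra)) as [K [HK1 [_ HK3]]]. simpl in HK3.
      assert (0 <= / K * l1norm lm) by (apply Rmult_le_pos; [left; apply Rinv_0_lt_compat|]; lra). lra. }
    set (e := (l1norm lm - M * Dv) / (2 * (Dv + 1))).
    assert (He : 0 < e) by (unfold e; apply Rdiv_lt_0_compat; lra).
    specialize (Hb e He).
    assert (e * Dv < l1norm lm - M * Dv).
    { unfold e. apply Rle_lt_trans with ((l1norm lm - M * Dv) / 2).
      - unfold Rdiv. rewrite Rinv_mult. 
        assert (/ (Dv + 1) * Dv <= 1).
        { apply Rmult_le_reg_l with (Dv + 1); [lra|]. field_simplify; lra. }
        assert (0 <= (l1norm lm - M * Dv) * / 2) by lra. nra.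
      - lra. }
    nra.
  - destruct (HK 1 ltac:(lra)) as [K [_ [_ HK3]]]. simpl in HK3. auto.
Qed.


Lemma inv_mul_le1 c x : 0 < c -> x <= c -> / c * x <= 1.
Proof.
  intros Hc Hx. replace 1 with (/ c * c) by (field; lra).
  apply Rmult_le_compat_l; auto. left; apply Rinv_0_lt_compat; auto.
Qed.

Lemma is_inf_ext (E E' : R -> Prop) M : (forall K, E K <-> E' K) -> is_inf E M -> is_inf E' M.
Proof.
  intros H [H1 H2]. split.
  - intros x Hx. apply H1, H, Hx.
  - intros b Hb. apply H2. intros x Hx. apply Hb, H, Hx.
Qed.

Lemma le_eps a b : (forall eps, 0 < eps -> a <= b + eps) -> a <= b.
Proof.
  intros H. apply Rnot_lt_le. intros Hlt. specialize (H ((a - b) / 2) ltac:(lra)). lra.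
Qed.

Lemma scale_sol f K c : Lip0 d x0 f -> lipnorm_le d f K ->
  Lip0 d x0 (fun x => c * f x) /\ lipnorm_le d (fun x => c * f x) (Rabs c * K).
Proof.
  intros [H0 [L HL]] HK. split; [split|].
  - rewrite H0; ring.
  - exists (Rabs c * L). apply LipC_lipnorm, scale_LipC, lipnorm_LipC, HL.
  - apply LipC_lipnorm, scale_LipC, lipnorm_LipC, HK.
Qed.

Lemma equiv_i_iv M : 1 <= M ->
  ((forall a, in_linf a -> exists f, Lip0 d x0 f /\ Tinterp d xs ys f = a) /\ is_inf E1 M) <-> is_inf E4 M.
Proof.
  intros HM. split.
  - intros [_ H]. apply (is_inf_ext E1); auto. intros K; split; apply E4_iff_E1.
  - intros H. assert (H4 : E4 M) by (apply inf_attained; auto; lra).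
    split; [|apply (is_inf_ext E4); auto; intros K; apply E4_iff_E1].
    apply E4_iff_E1 in H4. destruct H4 as [_ H4].
    intros a [B HB]. set (c := Rabs B + 1).
    assert (Hc : 0 < c) by (unfold c; pose proof (Rabs_pos B); lra).
    destruct (H4 (fun n => / c * a n)) as [f [Hf1 [Hf2 Hf3]]].
    + exists 1. intros n. rewrite Rabs_mult, Rabs_right by (left; apply Rinv_0_lt_compat; auto).
      apply inv_mul_le1; auto. specialize (HB n). pose proof (Rle_abs B). unfold c. lra.
    + intros n. rewrite Rabs_mult, Rabs_right by (left; apply Rinv_0_lt_compat; auto).
      apply inv_mul_le1; auto. specialize (HB n). pose proof (Rle_abs B). unfold c. lra.
    + exists (fun x => c * f x). split; [apply (scale_sol f M c Hf1 Hf2)|].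
      rewrite T_scale, Hf3. apply functional_extensionality; intros n. field. lra.
Qed.

Lemma equiv_ii_iv M : 1 <= M ->
  ((exists J, E2 J) /\ is_max E2 (/ M)) <-> is_inf E4 M.
Proof.
  intros HM. assert (HM0 : 0 < M) by lra. split.
  - intros [_ [H1 H2]]. assert (H4 : E4 M).
    { apply E2_iff_E4 in H1; [|apply Rinv_0_lt_compat; auto]. rewrite Rinv_inv in H1. auto. }
    split.
    + intros K HK. pose proof (E4_to_E2 K HK) as H. apply H2 in H.
      destruct HK as [HK _]. apply Rinv_le_contravar in H; [|apply Rinv_0_lt_compat; auto].
      rewrite !Rinv_inv in H. auto.
    + intros b Hb. apply Hb, H4.
  - intros H. assert (H4 : E4 M) by (apply inf_attained; auto).
    pose proof (E4_to_E2 M H4) as H2. split; [exists (/ M); auto|]. split; auto.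
    intros J HJ. pose proof HJ as HJ'. destruct HJ' as [HJ0 _]. apply E2_iff_E4 in HJ; auto.
    apply (proj1 H) in HJ. apply Rinv_le_contravar in HJ; auto. rewrite Rinv_inv in HJ. auto.
Qed.

Lemma equiv_iii_iv M : 1 <= M ->
  ((forall a, in_c0 a -> exists f, lip0 d x0 f /\ Tinterp d xs ys f = a) /\ is_inf E3 M) <-> is_inf E4 M.
Proof.
  intros HM. assert (HM0 : 0 < M) by lra. split.
  - intros [_ [H1 H2]]. split.
    + intros K HK. apply le_eps. intros eps Heps. apply H1.
      apply (E2_to_E3 (/ K)); [apply E4_to_E2; auto|]. rewrite Rinv_inv. lra.
    + intros b Hb. apply H2. intros x Hx. apply Hb, E3_to_E4, Hx.
  - intros H. assert (H4 : E4 M) by (apply inf_attained; auto).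
    pose proof (E4_to_E2 M H4) as H2.
    assert (H3 : forall eps, 0 < eps -> E3 (M + eps)).
    { intros eps Heps. apply (E2_to_E3 (/ M)); auto. rewrite Rinv_inv. lra. }
    split; [|split].
    + intros a Ha. destruct (c0_bounded a Ha) as [B [HB0 HB]].
      destruct (proj2 (H3 1 ltac:(lra)) (fun n => / B * a n)) as [f [Hf1 [_ Hf3]]].
      * unfold in_c0. replace (Finite 0) with (Rbar_mult (/ B) 0) by (simpl; f_equal; ring).
        apply is_lim_seq_scal_l, Ha.
      * intros n. rewrite Rabs_mult, Rabs_right by (left; apply Rinv_0_lt_compat; auto).
        apply inv_mul_le1; auto.
      * exists (fun x => B * f x). split.
        -- apply lip0_iff in Hf1. destruct Hf1 as [F0 [[L HL] hl]]. apply lip0_iff.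
           split; [rewrite F0; ring|]. split; [exists (Rabs B * L); apply scale_LipC; auto|].
           apply littleL_scale; auto.
        -- rewrite T_scale, Hf3. apply functional_extensionality; intros n. field. lra.
    + intros K HK. apply (proj1 H). apply E3_to_E4, HK.
    + intros b Hb. apply le_eps. intros eps Heps. apply Hb, H3, Heps.
Qed.

End Assembly.

End Seq.



End Main.


Theorem theorem4p6 (X : Type) (d : X -> X -> R) (x0 : X)
  (Hd : is_metric d) (Hcpt : mcompact d) (Hsep : separates_uniformly d x0)
  (xs ys : nat -> X)
  (Hne : forall n, xs n <> ys n)
  (Hdist : forall n m, n <> m -> (xs n, ys n) <> (xs m, ys m))
  (M : R) (HM : 1 <= M) :
  let T := Tinterp d xs ys in
  let cond_i :=
    (forall a, in_linf a -> exists f, Lip0 d x0 f /\ T f = a) /\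
    is_inf (fun K => 1 <= K /\ forall a, in_linf a -> sup_le1 a ->
              exists f, Lip0 d x0 f /\ lipnorm_le d f K /\ T f = a) M in
  let cond_ii :=
    (exists J, 0 < J /\ forall lam, in_l1 lam ->
        Rbar_le (J * l1norm lam) (dual_norm d x0 (S_op d xs ys lam))) /\
    is_max (fun J => 0 < J /\ forall lam, in_l1 lam ->
        Rbar_le (J * l1norm lam) (dual_norm d x0 (S_op d xs ys lam))) (/ M) in
  let cond_iii :=
    (forall a, in_c0 a -> exists f, lip0 d x0 f /\ T f = a) /\
    is_inf (fun K => 0 < K /\ forall a, in_c0 a -> sup_le1 a ->
              exists f, lip0 d x0 f /\ lipnorm_le d f K /\ T f = a) M in
  let cond_iv :=
    is_inf (fun K => 0 < K /\ forall a, in_c0 a -> sup_le1 a ->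
              exists f, Lip0 d x0 f /\ lipnorm_le d f K /\ T f = a) M in
  (cond_i <-> cond_ii) /\ (cond_ii <-> cond_iii) /\ (cond_iii <-> cond_iv).
Proof.
  intros T cond_i cond_ii cond_iii cond_iv.
  destruct Hsep as [aa [Haa Hsepa]].
  pose proof (equiv_i_iv X d x0 Hd xs ys Hne M HM) as H1.
  pose proof (equiv_ii_iv X d x0 Hd xs ys Hne M HM) as H2.
  pose proof (equiv_iii_iv X d x0 Hd xs ys Hne Hcpt aa Haa Hsepa M HM) as H3.
  change (cond_i <-> cond_iv) in H1.
  change (cond_ii <-> cond_iv) in H2.
  change (cond_iii <-> cond_iv) in H3.
  tauto.
Qed.
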